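(* For every pointed pseudotopological space $(X,x_0)$, the set $\pi_0^{\mathrm{ps}}\Omega^{\mathrm{ps}}(X,x_0)$ with multiplication $[l][l']=[l\cdot l']$ and inversion $[l]^{-1}=[l^{-1}]$ is a pseudotopological group; and for every pointed epitopological space $(X,x_0)$, $\pi_0^{\mathrm{epi}}\Omega^{\mathrm{epi}}(X,x_0)$ with the analogous operations is an epitopological group.
   Context: For a set $X$, $U(X)$ is the set of ultrafilters on $X$, $\dot x$ the principal ultrafilter at $x$; $f_*\mathscr F=\{S:f^{-1}(S)\in\mathscr F\}$. A pseudotopological space is a set $X$ with $u\subset U(X)\times X$ containing all $(\dot x,x)$; write $\mathscr U\to x$; for a filter, $\mathscr F\to x$ means every finer ultrafilter converges to $x$. Continuous maps: $\mathscr U\to x\Rightarrow f_*\mathscr U\to f(x)$. Subspaces and products carry initial structures; the final structure for $q\colon X\to Z$: $\mathscr U\to z$ iff $\mathscr U=\dot z$ or $\mathscr U=q_*\mathscr V$, $z=q(x)$ with $\mathscr V\to x$. Topological spaces are regarded as pseudotopological via ultrafilter convergence. For pseudotopological $X,Y$, $Y^X$ is the set of continuous maps with: a filter $\mathscr F\to f$ iff for every filter $\mathscr G\to x$, $\mathrm{ev}_*(\mathscr F\times\mathscr G)\to f(x)$. A pseudotopological space is epitopological if its structure is initial w.r.t. some family of maps $X\to Z_j^{Y_j}$, $Y_j,Z_j$ topological; these form the cartesian closed category $\mathsf{EpiTop}$ with the same products and subspaces. $\Omega^{\mathrm{ps}}(X,x_0)$: loops $l\colon[0,1]\to X$ with $l(0)=l(1)=x_0$,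 subspace of $X^{[0,1]}$; $\Omega^{\mathrm{epi}}$: same, in $\mathsf{EpiTop}$. Concatenation $(l\cdot l')(t)=l(2t)$ for $t\le1/2$, $l'(2t-1)$ for $t\ge 1/2$; inversion $l^{-1}(t)=l(1-t)$. $\pi_0^{\mathrm{ps}}A$: set of path components of $A$ (paths being continuous maps from $[0,1]$) with the final pseudotopology w.r.t. the projection; $\pi_0^{\mathrm{epi}}A$: path components with the smallest epitopological structure making the projection continuous. A pseudotopological (resp. epitopological) group is a group with a pseudotopological (resp. epitopological) structure making inversion and multiplication (on the product) continuous. *)

(* Defs.v *)
From HB Require Import structures.
From mathcomp Require Import all_boot all_order all_algebra.
From mathcomp Require Import boolp classical_sets reals topology.
From mathcomp Require Import Rstruct Rstruct_topology.

Set Implicit Arguments.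
Unset Strict Implicit.
Unset Printing Implicit Defensive.
Import Order.TTheory GRing.Theory Num.Theory.
Local Open Scope classical_set_scope.
Local Open Scope ring_scope.

Definition is_filter {X : Type} (F : set (set X)) : Prop :=
  F setT /\ (forall A B, F A -> F B -> F (A `&` B)) /\
  (forall A B, A `<=` B -> F A -> F B).

Definition is_ultrafilter {X : Type} (U : set (set X)) : Prop :=
  is_filter U /\ ~ U set0 /\ (forall A, U A \/ U (~` A)).

Definition principal {X : Type} (x : X) : set (set X) := fun A => A x.

Definition pushforward {X Y : Type} (f : X -> Y) (F : set (set X)) : set (set Y) :=
  fun S => F (f @^-1` S).

Definition prod_filter {X Y : Type} (F : set (set X)) (G : set (set Y))
  : set (set (X * Y)) :=
  fun S => exists A B, F A /\ G B /\ A `*` B `<=` S.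

Record pstop := PsTop { ps_car :> Type ; ps_conv : set (set ps_car) -> ps_car -> Prop }.

Definition pseudotopological (X : pstop) : Prop :=
  (forall U x, @ps_conv X U x -> is_ultrafilter U) /\
  (forall x : X, @ps_conv X (principal x) x).

Definition fconv (X : pstop) (F : set (set X)) (x : X) : Prop :=
  forall U, is_ultrafilter U -> F `<=` U -> @ps_conv X U x.

Definition pcont (X Y : pstop) (f : X -> Y) : Prop :=
  forall (U : set (set X)) (x : X), @ps_conv X U x -> @ps_conv Y (pushforward f U) (f x).

Definition ps_of_top (T : topologicalType) : pstop :=
  @PsTop T (fun U x => is_ultrafilter U /\ nbhs x `<=` U).

Definition sub_space (X : pstop) (P : set X) : pstop :=
  @PsTop {x : X | P x}
    (fun U x => is_ultrafilter U /\ @ps_conv X (pushforward (@proj1_sig _ _) U) (proj1_sig x)).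

Definition prod_space (X Y : pstop) : pstop :=
  @PsTop (X * Y)%type
    (fun U p => is_ultrafilter U /\ @ps_conv X (pushforward fst U) p.1 /\
                @ps_conv Y (pushforward snd U) p.2).

Definition cmap (X Y : pstop) := {f : X -> Y | pcont f}.

Definition evalc (X Y : pstop) (p : cmap X Y * X) : Y := proj1_sig p.1 p.2.

Definition fun_space (X Y : pstop) : pstop :=
  @PsTop (cmap X Y)
    (fun F f => is_ultrafilter F /\
       forall (G : set (set X)) (x : X), is_filter G -> fconv G x ->
         fconv (pushforward (@evalc X Y) (prod_filter F G)) (proj1_sig f x)).

Definition epitopological (X : pstop) : Prop :=
  exists (J : Type) (Y Z : J -> topologicalType)
         (f : forall j, X -> fun_space (ps_of_top (Y j)) (ps_of_top (Z j))),
    forall (U : set (set X)) (x : X),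
      @ps_conv X U x <->
      (is_ultrafilter U /\ forall j, @ps_conv _ (pushforward (f j) U) (f j x)).

Definition Rl := Rdefinitions.R.

Definition I01 : pstop :=
  sub_space (X := ps_of_top Rl) (fun t : Rl => 0 <= t <= 1).

Lemma clamp_in (t : Rl) : 0 <= Num.max 0 (Num.min 1 t) <= 1.
Proof.
apply/andP; split; first by rewrite le_max lexx.
by rewrite ge_max ler01 ge_min lexx.
Qed.

Definition clampI (t : Rl) : I01 := exist _ (Num.max 0 (Num.min 1 t)) (clamp_in t).

Definition I0 : I01 := clampI 0.
Definition I1 : I01 := clampI 1.

Definition concat (X : Type) (l l' : I01 -> X) (t : I01) : X :=
  if proj1_sig t <= 2^-1 then l (clampI (2 * proj1_sig t))
  else l' (clampI (2 * proj1_sig t - 1)).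

Definition reverse (X : Type) (l : I01 -> X) (t : I01) : X :=
  l (clampI (1 - proj1_sig t)).

Definition loop_space (X : pstop) (x0 : X) : pstop :=
  sub_space (X := fun_space I01 X)
    (fun l => proj1_sig l I0 = x0 /\ proj1_sig l I1 = x0).

Definition loop_fun (X : pstop) (x0 : X) (l : loop_space x0) : I01 -> X :=
  proj1_sig (proj1_sig l).

Definition path_rel (A : pstop) (a b : A) : Prop :=
  exists p : cmap I01 A, proj1_sig p I0 = a /\ proj1_sig p I1 = b.

Definition pcomp (A : pstop) (a : A) : set A := path_rel a.

Definition pi0car (A : pstop) := {C : set A | exists a, C = pcomp a}.

Definition pi0_proj (A : pstop) (a : A) : pi0car A :=
  exist _ (pcomp a) (ex_intro _ a erefl).

(* final pseudotopology w.r.t. the projection *)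
Definition pi0_ps (A : pstop) : pstop :=
  @PsTop (pi0car A)
    (fun U z => U = principal z \/
       exists (V : set (set A)) (x : A),
         @ps_conv A V x /\ z = pi0_proj x /\ U = pushforward (@pi0_proj A) V).

Definition pi0_epi (A : pstop) : pstop :=
  @PsTop (pi0car A)
    (fun U z => forall c : set (set (pi0car A)) -> pi0car A -> Prop,
       pseudotopological (@PsTop (pi0car A) c) ->
       epitopological (@PsTop (pi0car A) c) ->
       pcont (X := A) (Y := @PsTop (pi0car A) c) (@pi0_proj A) ->
       c U z).

Definition ps_group (G : pstop) (mul : G -> G -> G) (inv : G -> G) (e : G) : Prop :=
  pseudotopological G /\
  (forall a b c, mul a (mul b c) = mul (mul a b) c) /\
  (forall a, mul e a = a /\ mul a e = a) /\
  (forall a, mul (inv a) a = e /\ mul a (inv a) = e) /\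
  pcont (X := prod_space G G) (Y := G) (fun p => mul p.1 p.2) /\
  pcont (X := G) (Y := G) inv.

Definition epi_group (G : pstop) (mul : G -> G -> G) (inv : G -> G) (e : G) : Prop :=
  ps_group mul inv e /\ epitopological G.

Definition loop_ops_ok (X : pstop) (x0 : X)
  (mul : pi0car (loop_space x0) -> pi0car (loop_space x0) -> pi0car (loop_space x0))
  (inv : pi0car (loop_space x0) -> pi0car (loop_space x0)) : Prop :=
  (forall l l' : loop_space x0, exists m : loop_space x0,
      loop_fun m = concat (loop_fun l) (loop_fun l')) /\
  (forall l : loop_space x0, exists m : loop_space x0,
      loop_fun m = reverse (loop_fun l)) /\
  (forall l l' m : loop_space x0, loop_fun m = concat (loop_fun l) (loop_fun l') ->
      mul (pi0_proj l) (pi0_proj l') = pi0_proj m) /\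
  (forall l m : loop_space x0, loop_fun m = reverse (loop_fun l) ->
      inv (pi0_proj l) = pi0_proj m).

(* Main.v *)
Require Import Defs.
From HB Require Import structures.
From mathcomp Require Import all_boot all_order all_algebra.
From mathcomp Require Import boolp classical_sets reals topology.
From mathcomp Require Import Rstruct Rstruct_topology.
From mathcomp Require Import ring lra.
Set Implicit Arguments. Unset Strict Implicit. Unset Printing Implicit Defensive.
Import Order.TTheory GRing.Theory Num.Theory.
Local Open Scope classical_set_scope.
From mathcomp Require Import normedtype.
Import numFieldNormedType.Exports.

Lemma sig_eq (T : Type) (P : T -> Prop) (x y : {z | P z}) :
  proj1_sig x = proj1_sig y -> x = y.
Proof.
case: x => x px; case: y => y py /= exy; subst y.
by rewrite (Prop_irrelevance px py).
Qed.

Section Filters.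
Variable X : Type.
Implicit Types (F G U : set (set X)) (A B : set X).

Lemma ultra_filter U : is_ultrafilter U -> is_filter U.
Proof. by case. Qed.

Lemma ultra_T U : is_ultrafilter U -> U setT.
Proof. by move=> [[h _] _]. Qed.

Lemma ultra_I U A B : is_ultrafilter U -> U A -> U B -> U (A `&` B).
Proof. by move=> [[_ [h _]] _]; apply: h. Qed.

Lemma ultra_S U A B : is_ultrafilter U -> A `<=` B -> U A -> U B.
Proof. by move=> [[_ [_ h]] _]; apply: h. Qed.

Lemma ultra_0 U : is_ultrafilter U -> ~ U set0.
Proof. by move=> [_ [h _]]. Qed.

Lemma ultra_C U A : is_ultrafilter U -> U A \/ U (~` A).
Proof. by move=> [_ [_ h]]; exact: h. Qed.

Lemma ultra_notC U A : is_ultrafilter U -> U A -> ~ U (~` A).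
Proof.
move=> hU hA hC; apply: (ultra_0 hU).
have := ultra_I hU hA hC; apply: (ultra_S hU) => // x [].
by move=> a b; exact: b.
Qed.

Lemma ultra_ne U A : is_ultrafilter U -> U A -> exists x, A x.
Proof.
move=> hU hA; apply: contrapT => hn; apply: (ultra_0 hU).
apply: (ultra_S hU _ hA) => x Ax; apply: hn; by exists x.
Qed.

Lemma ultra_U U A B : is_ultrafilter U -> U (A `|` B) -> U A \/ U B.
Proof.
move=> hU hAB; case: (ultra_C A hU) => [|hA]; first by left.
case: (ultra_C B hU) => [|hB]; first by right.
exfalso; apply: (ultra_0 hU).
have := ultra_I hU hAB (ultra_I hU hA hB); apply: (ultra_S hU) => x [[a|b] [na nb]].
- exact: na a.
- exact: nb b.
Qed.

Lemma filter_S F A B : is_filter F -> A `<=` B -> F A -> F B.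
Proof. by move=> [_ [_ h]]; exact: h. Qed.
Lemma filter_I F A B : is_filter F -> F A -> F B -> F (A `&` B).
Proof. by move=> [_ [h _]]; exact: h. Qed.
Lemma filter_T F : is_filter F -> F setT.
Proof. by move=> [h _]. Qed.

Lemma ultra_max U F : is_ultrafilter U -> is_filter F -> ~ F set0 -> U `<=` F -> F = U.
Proof.
move=> hU hF hF0 sUF; apply/funext => A; apply/propext; split=> [hA|]; last exact: sUF.
case: (ultra_C A hU) => // hC; exfalso; apply: hF0.
have := filter_I hF hA (sUF _ hC); apply: filter_S => // x [].
by move=> a b; exact: b a.
Qed.

Lemma ultra_ext F : is_filter F -> ~ F set0 -> exists U, is_ultrafilter U /\ F `<=` U.
Proof.
move=> hF hF0.
have PF : ProperFilter F.
  apply: Build_ProperFilter => //; split.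
  - exact: filter_T.
  - by move=> A B; apply: filter_I.
  - by move=> A B; apply: filter_S.
have [G [UG sFG]] := ultraFilterLemma PF.
exists G; split => //; split; last split.
- split; first exact: filterT.
  split; [by move=> A B; apply: filterI | by move=> A B; apply: filterS].
- exact: filter_not_empty.
- by move=> A; apply: in_ultra_setVsetC.
Qed.

Lemma principal_ultra (x : X) : is_ultrafilter (principal x).
Proof.
split; [split; [by []|split]|split].
- by move=> A B ha hb; split.
- by move=> A B sAB ha; apply: sAB.
- by [].
- move=> A; rewrite /principal; case: (pselect (A x)) => h; [left|right] => //.
Qed.

Lemma ultra_eq_principal U (x : X) : is_ultrafilter U -> U [set x] -> U = principal x.
Proof.
move=> hU hx; apply/esym/(ultra_max hU).
- exact/ultra_filter/principal_ultra.
- exact: (ultra_0 (principal_ultra x)).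
- move=> A hA; have [y [Ay yx]] := ultra_ne hU (ultra_I hU hA hx); by rewrite /principal -yx.
Qed.

Definition fjoin F (L : set X) : set (set X) := fun S => exists B, F B /\ B `&` L `<=` S.

Lemma fjoin_filter F L : is_filter F -> is_filter (fjoin F L).
Proof.
move=> hF; split; first by exists setT; split; [exact: filter_T|].
split.
- move=> A B [A' [hA' sA]] [B' [hB' sB]]; exists (A' `&` B'); split; first exact: filter_I.
  by move=> x [[a b] l]; split; [apply: sA|apply: sB].
- by move=> A B sAB [A' [hA' sA]]; exists A'; split => // x /sA /sAB.
Qed.

Lemma fjoin_sub F L : is_filter F -> F `<=` fjoin F L.
Proof. by move=> hF A hA; exists A; split => // x []. Qed.

Lemma fjoin_L F L : is_filter F -> fjoin F L L.
Proof. by move=> hF; exists setT; split; [exact: filter_T| move=> x []]. Qed.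

End Filters.

Section Push.
Variables (X Y : Type).
Implicit Types (F G : set (set X)).

Lemma push_filter (f : X -> Y) F : is_filter F -> is_filter (pushforward f F).
Proof.
move=> hF; split; first by apply: (filter_S hF _ (filter_T hF)).
split; first by move=> A B ha hb; exact: (filter_I hF ha hb).
by move=> A B sAB ha; apply: (filter_S hF _ ha) => x /sAB.
Qed.

Lemma push_ultra (f : X -> Y) U : is_ultrafilter U -> is_ultrafilter (pushforward f U).
Proof.
move=> hU; split; first exact/push_filter/ultra_filter.
split; first by move=> h; apply: (ultra_0 hU); apply: (ultra_S hU _ h) => x.
by move=> A; exact: (ultra_C (f @^-1` A) hU).
Qed.

Lemma push_principal (f : X -> Y) (x : X) : pushforward f (principal x) = principal (f x).
Proof. by []. Qed.

Lemma push_ext (f g : X -> Y) F (S : set X) : is_filter F -> F S ->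
  (forall x, S x -> f x = g x) -> pushforward f F = pushforward g F.
Proof.
move=> hF hS efg; apply/funext => A; apply/propext; rewrite /pushforward.
split=> h; have := filter_I hF h hS; apply: filter_S => // x [].
- by rewrite /preimage /= => Afx /efg <-.
- by rewrite /preimage /= => Agx /efg ->.
Qed.

Lemma ultra_lift (f : X -> Y) F (K : set (set Y)) : is_filter F -> is_ultrafilter K ->
  pushforward f F `<=` K ->
  exists W, is_ultrafilter W /\ F `<=` W /\ pushforward f W = K.
Proof.
move=> hF hK sFK.
pose H := fun S : set X => exists A B, F A /\ K B /\ A `&` f @^-1` B `<=` S.
have hH : is_filter H.
  split; first by exists setT, setT; split; [exact: filter_T|split; [exact: ultra_T|]].
  split.
  - move=> S1 S2 [A1 [B1 [h1 [k1 s1]]]] [A2 [B2 [h2 [k2 s2]]]].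
    exists (A1 `&` A2), (B1 `&` B2); split; first exact: filter_I.
    split; first exact: ultra_I.
    by move=> x [[a1 a2] [b1 b2]]; split; [apply: s1|apply: s2].
  - by move=> S1 S2 s12 [A [B [h [k s]]]]; exists A, B; do 2 split => //; move=> x /s /s12.
have hH0 : ~ H set0.
  move=> [A [B [hA [hB s]]]].
  have : K (~` B).
    apply: sFK; apply: (filter_S hF _ hA) => x Ax Bfx; exact: (s x (conj Ax Bfx)).
  exact: ultra_notC hB.
have [W [hW sHW]] := ultra_ext hH hH0.
exists W; split => //; split.
- by move=> A hA; apply: sHW; exists A, setT; split => //; split; [exact: ultra_T| move=> x []].
- apply: ultra_max => //; first exact/push_filter/ultra_filter.
  + by apply: (ultra_0 (push_ultra f hW)).
  + move=> B hB; apply: sHW; exists setT, B; split; first exact: filter_T.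
    by split => // x [].
Qed.

End Push.

Section Prod.
Variables (X Y : Type).

Lemma prod_filter_filter (F : set (set X)) (G : set (set Y)) :
  is_filter F -> is_filter G -> is_filter (prod_filter F G).
Proof.
move=> hF hG; split.
  by exists setT, setT; split; [exact: filter_T|split; [exact: filter_T|]].
split.
- move=> S1 S2 [A1 [B1 [h1 [k1 s1]]]] [A2 [B2 [h2 [k2 s2]]]].
  exists (A1 `&` A2), (B1 `&` B2); split; first exact: filter_I.
  split; first exact: filter_I.
  by move=> [x y] [/= [a1 a2] [b1 b2]]; split; [apply: s1|apply: s2].
- by move=> S1 S2 s12 [A [B [h [k s]]]]; exists A, B; do 2 split => //; move=> x /s /s12.
Qed.

Lemma prod_filter_sub (W : set (set (X * Y))) : is_filter W ->
  prod_filter (pushforward fst W) (pushforward snd W) `<=` W.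
Proof.
move=> hW S [A [B [hA [hB s]]]].
by have := filter_I hW hA hB; apply: filter_S => // -[x y] [/= a b]; apply: s.
Qed.

Lemma prod_filter_mono (F F' : set (set X)) (G G' : set (set Y)) :
  F `<=` F' -> G `<=` G' -> prod_filter F G `<=` prod_filter F' G'.
Proof. by move=> s1 s2 S [A [B [hA [hB s]]]]; exists A, B; split; [apply: s1|split; [apply: s2|]]. Qed.

Lemma prod_fst (F : set (set X)) (G : set (set Y)) : is_filter G ->
  F `<=` pushforward fst (prod_filter F G).
Proof. by move=> hG A hA; exists A, setT; split => //; split; [exact: filter_T| move=> [x y] []]. Qed.

Lemma prod_snd (F : set (set X)) (G : set (set Y)) : is_filter F ->
  G `<=` pushforward snd (prod_filter F G).
Proof. by move=> hF A hA; exists setT, A; split; [exact: filter_T|split => //; move=> [x y] []]. Qed.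

Lemma ultra_fst_prod (U : set (set X)) (G : set (set Y)) W :
  is_ultrafilter U -> is_filter G -> is_ultrafilter W -> prod_filter U G `<=` W ->
  pushforward fst W = U.
Proof.
move=> hU hG hW s; apply: ultra_max => //; first exact/push_filter/ultra_filter.
- exact: (ultra_0 (push_ultra fst hW)).
- by move=> A hA; apply: s; apply: prod_fst.
Qed.

Lemma ultra_snd_prod (F : set (set X)) (U : set (set Y)) W :
  is_filter F -> is_ultrafilter U -> is_ultrafilter W -> prod_filter F U `<=` W ->
  pushforward snd W = U.
Proof.
move=> hF hU hW s; apply: ultra_max => //; first exact/push_filter/ultra_filter.
- exact: (ultra_0 (push_ultra snd hW)).
- by move=> A hA; apply: s; apply: prod_snd.
Qed.

End Prod.

Lemma fconv_ultra (X : pstop) (U : set (set X)) x :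
  is_ultrafilter U -> fconv U x -> ps_conv U x.
Proof. by move=> hU; apply. Qed.

Lemma conv_fconv (X : pstop) (U : set (set X)) x :
  pseudotopological X -> ps_conv U x -> fconv U x.
Proof.
move=> [hX _] hc V hV sUV; have hU := hX _ _ hc.
by rewrite (ultra_max hU (ultra_filter hV) (ultra_0 hV) sUV).
Qed.

Lemma fconv_mono (X : pstop) (F G : set (set X)) x : F `<=` G -> fconv F x -> fconv G x.
Proof. by move=> s h U hU sGU; apply: h => //; apply: subset_trans sGU. Qed.

Lemma fconv_push (X Y : pstop) (f : X -> Y) (F : set (set X)) x :
  pcont f -> is_filter F -> fconv F x -> fconv (pushforward f F) (f x).
Proof.
move=> hf hF hc K hK sK.
have [W [hW [sW eW]]] := ultra_lift hF hK sK.
rewrite -eW; apply: hf; exact: hc.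
Qed.

Lemma pcont_comp (X Y Z : pstop) (f : X -> Y) (g : Y -> Z) :
  pcont f -> pcont g -> pcont (fun x => g (f x)).
Proof. by move=> hf hg U x hU; apply: (hg _ _ (hf _ _ hU)). Qed.

Lemma pcont_id (X : pstop) : pcont (fun x : X => x).
Proof. by move=> U x. Qed.

Lemma pcont_const (X Y : pstop) (y : Y) : pseudotopological X -> pseudotopological Y ->
  pcont (fun _ : X => y).
Proof.
move=> [hX _] [_ hY] U x hU.
have -> : pushforward (fun _ : X => y) U = principal y.
  apply/funext => A; apply/propext; rewrite /pushforward /principal; split.
  - move=> h; case: (pselect (A y)) => // nA; exfalso; apply: (ultra_0 (hX _ _ hU)).
    by apply: (ultra_S (hX _ _ hU) _ h) => ? /=.
  - by move=> Ay; apply: (ultra_S (hX _ _ hU) _ (ultra_T (hX _ _ hU))) => ? _.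
exact: hY.
Qed.

Lemma fs_principal (X Y : pstop) (f : cmap X Y) :
  @ps_conv (fun_space X Y) (principal f) f.
Proof.
split; first exact: principal_ultra.
move=> G x hG hc; apply: fconv_mono (fconv_push (proj2_sig f) hG hc).
move=> S hS; exists [set f], (proj1_sig f @^-1` S); split; first by [].
by split => // -[g t] [/= -> h].

Qed.

Lemma fs_conv_ultra (X Y : pstop) F f : @ps_conv (fun_space X Y) F f -> is_ultrafilter F.
Proof. by case. Qed.

Lemma fs_pseudo (X Y : pstop) : pseudotopological (fun_space X Y).
Proof. by split; [move=> U x []| move=> f; apply: fs_principal]. Qed.

Lemma sub_pseudo (X : pstop) (P : set X) : pseudotopological X -> pseudotopological (sub_space P).
Proof.
move=> [_ hX]; split; first by move=> U x [].
by move=> x; split; [exact: principal_ultra|apply: hX].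
Qed.

Lemma prod_pseudo (X Y : pstop) : pseudotopological X -> pseudotopological Y -> pseudotopological (prod_space X Y).
Proof.
move=> [_ hX] [_ hY]; split; first by move=> U x [].
by move=> x; split; [exact: principal_ultra|split; [apply: hX|apply: hY]].
Qed.

Lemma pcont_pair (Z X Y : pstop) (f : Z -> X) (g : Z -> Y) :
  pseudotopological Z -> pcont f -> pcont g ->
  pcont (X := Z) (Y := prod_space X Y) (fun z => (f z, g z)).
Proof.
move=> [hZ _] hf hg U z hU; split; first exact/push_ultra/(hZ _ _ hU).
by split; [apply: hf|apply: hg].
Qed.

Lemma pcont_fst (X Y : pstop) : pcont (X := prod_space X Y) (Y := X) fst.
Proof. by move=> U z [_ []]. Qed.
Lemma pcont_snd (X Y : pstop) : pcont (X := prod_space X Y) (Y := Y) snd.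
Proof. by move=> U z [_ []]. Qed.

Local Open Scope ring_scope.

Lemma lip_max (R : realType) (c x y : R) : `|Num.max c x - Num.max c y| <= `|x - y|.
Proof.
have h1 := ler_norm (x - y). have h2 := ler_norm (y - x). rewrite distrC in h2.
rewrite ler_norml.
case: (leP c x) => ?; case: (leP c y) => ?; apply/andP; split; lra.
Qed.
Lemma lip_min (R : realType) (c x y : R) : `|Num.min c x - Num.min c y| <= `|x - y|.
Proof.
have h1 := ler_norm (x - y). have h2 := ler_norm (y - x). rewrite distrC in h2.
rewrite ler_norml.
case: (leP c x) => ?; case: (leP c y) => ?; apply/andP; split; lra.
Qed.

Definition vI (t : I01) : Rl := proj1_sig t.

Lemma vI_inj (a b : I01) : vI a = vI b -> a = b.
Proof. exact: sig_eq. Qed.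

Lemma vI01 (t : I01) : 0 <= vI t <= 1.
Proof. exact: (proj2_sig t). Qed.

Lemma vI_ge0 (t : I01) : 0 <= vI t.
Proof. by case/andP: (vI01 t). Qed.
Lemma vI_le1 (t : I01) : vI t <= 1.
Proof. by case/andP: (vI01 t). Qed.

Lemma vclamp (r : Rl) : 0 <= r <= 1 -> vI (clampI r) = r.
Proof.
case/andP=> h0 h1; rewrite /vI /clampI /=.
by case: (leP 1 r) => ?; case: (leP 0 _) => ?; lra.
Qed.

Lemma clampI_v (t : I01) : clampI (vI t) = t.
Proof. by apply: vI_inj; rewrite vclamp // vI01. Qed.

Lemma clamp_lip (a b : Rl) : `|vI (clampI a) - vI (clampI b)| <= `|a - b|.
Proof. rewrite /vI /=; apply: le_trans; [exact: lip_max | exact: lip_min]. Qed.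

Lemma vclamp_range (r : Rl) : 0 <= vI (clampI r) <= 1.
Proof. exact: vI01. Qed.

Lemma vI0 : vI I0 = 0.
Proof. by rewrite vclamp // lexx ler01. Qed.
Lemma vI1 : vI I1 = 1.
Proof. by rewrite vclamp // lexx ler01. Qed.

Lemma nbhsR (x : Rl) (N : set Rl) : nbhs x N <-> exists e : Rl, 0 < e /\ forall y, `|x - y| < e -> N y.
Proof.
rewrite nbhs_ballP; split.
- move=> [e e0 h]; exists e; split => // y hy; apply: h; exact: hy.
- move=> [e [e0 h]]; exists e => // y hy; apply: h; exact: hy.
Qed.

Lemma I01_conv (V : set (set I01)) (s : I01) :
  @ps_conv I01 V s <-> is_ultrafilter V /\ (forall N, nbhs (vI s) N -> V (vI @^-1` N)).
Proof.
split; first by case=> hV [_ h]; split.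
by case=> hV h; split => //; split => //; exact: push_ultra.
Qed.

Lemma I01_fconv (G : set (set I01)) (s : I01) : is_filter G ->
  (fconv G s <-> forall N, nbhs (vI s) N -> G (vI @^-1` N)).
Proof.
move=> hG; split.
- move=> hc N hN; apply: contrapT => hn.
  pose F := fjoin G (~` (vI @^-1` N)).
  have hF : is_filter F by exact: fjoin_filter.
  have hF0 : ~ F set0.
    move=> [B [hB sB]]; apply: hn; apply: (filter_S hG _ hB) => x Bx.
    by apply: contrapT => nx; apply: (sB x).
  have [U [hU sFU]] := ultra_ext hF hF0.
  have : @ps_conv I01 U s by apply: hc => //; apply: subset_trans sFU; exact: fjoin_sub.
  move/I01_conv => [_ /(_ N hN) hUN].
  apply: (ultra_notC hU hUN); apply: sFU; exact: fjoin_L.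
- move=> h U hU sGU; apply/I01_conv; split => // N hN; exact/sGU/h.
Qed.

Lemma ball_nbhs (x e : Rl) : 0 < e -> nbhs x [set y | `|x - y| < e].
Proof. by move=> e0; apply/nbhsR; exists e. Qed.

Lemma lip2 (Phi : I01 -> I01 -> I01) (K : Rl) : 0 < K ->
  (forall s t s' t', `|vI (Phi s t) - vI (Phi s' t')| <= K * (`|vI s - vI s'| + `|vI t - vI t'|)) ->
  forall (W : set (set (I01 * I01))) s t, is_ultrafilter W ->
    @ps_conv I01 (pushforward fst W) s -> @ps_conv I01 (pushforward snd W) t ->
    @ps_conv I01 (pushforward (fun p => Phi p.1 p.2) W) (Phi s t).
Proof.
move=> K0 hP W s t hW /I01_conv [_ hs] /I01_conv [_ ht].
apply/I01_conv; split; first exact: push_ultra.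
move=> N /nbhsR [e [e0 he]].
have d0 : 0 < e / (2 * K) by apply: divr_gt0 => //; lra.
have A1 := hs _ (ball_nbhs (vI s) d0).
have A2 := ht _ (ball_nbhs (vI t) d0).
have := ultra_I hW A1 A2; apply: (ultra_S hW) => -[a b] [/= h1 h2].
apply: he; apply: le_lt_trans (hP s t a b) _.
have e2 : e = K * (e / (2 * K) + e / (2 * K)).
  by field; rewrite gt_eqF.
rewrite [X in _ < X]e2 ltr_pM2l //; exact: ltrD.
Qed.

Lemma lip1 (f : I01 -> I01) (K : Rl) : 0 < K ->
  (forall a b, `|vI (f a) - vI (f b)| <= K * `|vI a - vI b|) -> pcont f.
Proof.
move=> K0 hf V s hV.
have hU : is_ultrafilter V by case: hV.
have := @lip2 (fun _ t => f t) K K0 _ (pushforward (fun u => (u, u)) V) s s (push_ultra _ hU) hV hV.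
apply.
move=> a b a' b'; apply: le_trans (hf b b') _.
rewrite ler_pM2l //; rewrite lerDr; exact: normr_ge0.
Qed.

Local Open Scope ring_scope.

Lemma near_gt (x c : Rl) : c < x -> nbhs x [set y | c < y].
Proof.
move=> h; apply/nbhsR; exists (x - c); split; first lra.
move=> y; rewrite ltr_norml => /andP [h1 h2] /=; lra.
Qed.
Lemma near_lt (x c : Rl) : x < c -> nbhs x [set y | y < c].
Proof.
move=> h; apply/nbhsR; exists (c - x); split; first lra.
move=> y; rewrite ltr_norml => /andP [h1 h2] /=; lra.
Qed.

Lemma conv_le (V : set (set I01)) s (c : Rl) : @ps_conv I01 V s ->
  V [set u | vI u <= c] -> vI s <= c.
Proof.
move=> /I01_conv [hV hs] hL; case: (leP (vI s) c) => // /near_gt /hs hN.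
exfalso; have [u [/= h1 h2]] := ultra_ne hV (ultra_I hV hL hN); lra.
Qed.

Lemma conv_ge (V : set (set I01)) s (c : Rl) : @ps_conv I01 V s ->
  V (~` [set u | vI u <= c]) -> c <= vI s.
Proof.
move=> /I01_conv [hV hs] hL; case: (leP c (vI s)) => // /near_lt /hs hN.
exfalso; have [u [/= h1 h2]] := ultra_ne hV (ultra_I hV hL hN); apply: h1; lra.
Qed.

Definition d1 (t : I01) : I01 := clampI (2 * vI t).
Definition d2 (t : I01) : I01 := clampI (2 * vI t - 1).
Definition rv (t : I01) : I01 := clampI (1 - vI t).

Lemma d1_pcont : pcont d1.
Proof.
apply: (@lip1 _ 2) => // a b; apply: le_trans (clamp_lip _ _) _.
by rewrite -mulrBr normrM ger0_norm.
Qed.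
Lemma d2_pcont : pcont d2.
Proof.
apply: (@lip1 _ 2) => // a b; apply: le_trans (clamp_lip _ _) _.
have -> : 2 * vI a - 1 - (2 * vI b - 1) = 2 * (vI a - vI b) by ring.
by rewrite normrM ger0_norm.
Qed.
Lemma rv_pcont : pcont rv.
Proof.
apply: (@lip1 _ 1) => // a b; apply: le_trans (clamp_lip _ _) _.
have -> : 1 - vI a - (1 - vI b) = - (vI a - vI b) by ring.
by rewrite normrN mul1r.
Qed.

Lemma I01_pseudo : pseudotopological I01.
Proof.
apply: sub_pseudo; split; first by move=> U x [].
move=> x; split; first exact: principal_ultra.
by move=> A hA; apply: nbhs_singleton.
Qed.

Ltac vcl := rewrite vclamp; [try lra | apply/andP; split; lra].
Lemma d1_0 : d1 I0 = I0.
Proof. by apply: vI_inj; rewrite /d1 vI0; vcl. Qed.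
Lemma d1_half (t : I01) : vI t = 2^-1 -> d1 t = I1.
Proof. by move=> h; apply: vI_inj; rewrite /d1 h vI1; vcl. Qed.
Lemma d2_half (t : I01) : vI t = 2^-1 -> d2 t = I0.
Proof. by move=> h; apply: vI_inj; rewrite /d2 h vI0; vcl. Qed.
Lemma d2_1 : d2 I1 = I1.
Proof. by apply: vI_inj; rewrite /d2 vI1; vcl. Qed.
Lemma rv_0 : rv I0 = I1.
Proof. by apply: vI_inj; rewrite /rv vI0 vI1; vcl. Qed.
Lemma rv_1 : rv I1 = I0.
Proof. by apply: vI_inj; rewrite /rv vI1 vI0; vcl. Qed.

Definition Lh : set I01 := [set u | vI u <= 2^-1].

Lemma concat_L (A : Type) (p q : I01 -> A) t : Lh t -> concat p q t = p (d1 t).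
Proof. by rewrite /concat /Lh /= => ->. Qed.
Lemma concat_R (A : Type) (p q : I01 -> A) t : ~ Lh t -> concat p q t = q (d2 t).
Proof. by rewrite /concat /Lh /= => /negP/negbTE ->. Qed.

Lemma concat_pcont (A : pstop) (p q : I01 -> A) : pcont p -> pcont q -> p I1 = q I0 ->
  pcont (concat p q).
Proof.
move=> hp hq e V s hV.
have hU : is_ultrafilter V by case: hV.
case: (ultra_C Lh hU) => hL.
- have hs := conv_le hV hL.
  rewrite (push_ext (g := fun t => p (d1 t)) (ultra_filter hU) hL); last by move=> x; exact: concat_L.
  rewrite concat_L //; apply: (pcont_comp d1_pcont hp); exact: hV.
- have hs := conv_ge hV hL.
  rewrite (push_ext (g := fun t => q (d2 t)) (ultra_filter hU) hL); last by move=> x; exact: concat_R.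
  have -> : concat p q s = q (d2 s).
    case: (pselect (Lh s)) => hLs; last exact: concat_R.
    have h2 : vI s = 2^-1 by rewrite /Lh /= in hLs; lra.
    by rewrite concat_L // d1_half // d2_half.
  apply: (pcont_comp d2_pcont hq); exact: hV.
Qed.

Lemma Lh0 : Lh I0.
Proof. change (vI I0 <= 2^-1); rewrite vI0; lra. Qed.
Lemma Lh1 : ~ Lh I1.
Proof. change (~ (vI I1 <= 2^-1)); rewrite vI1 => h; lra. Qed.

Lemma concat_I0 (A : Type) (p q : I01 -> A) : concat p q I0 = p I0.
Proof. by rewrite concat_L ?d1_0 //; exact: Lh0. Qed.
Lemma concat_I1 (A : Type) (p q : I01 -> A) : concat p q I1 = q I1.
Proof. by rewrite concat_R ?d2_1 //; exact: Lh1. Qed.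

Lemma reverse_pcont (A : pstop) (p : I01 -> A) : pcont p -> pcont (reverse p).
Proof. by move=> hp; apply: (pcont_comp rv_pcont hp). Qed.

Lemma reverse_I0 (A : Type) (p : I01 -> A) : reverse p I0 = p I1.
Proof. by rewrite /reverse -/(rv I0) rv_0. Qed.
Lemma reverse_I1 (A : Type) (p : I01 -> A) : reverse p I1 = p I0.
Proof. by rewrite /reverse -/(rv I1) rv_1. Qed.

Section PathRel.
Variable A : pstop.
Hypothesis hA : pseudotopological A.

Lemma path_refl (a : A) : path_rel a a.
Proof.
by exists (exist _ (fun _ => a) (pcont_const a I01_pseudo hA)).
Qed.

Lemma path_sym (a b : A) : path_rel a b -> path_rel b a.
Proof.
move=> [p [pa pb]].
exists (exist _ (reverse (proj1_sig p)) (reverse_pcont (proj2_sig p))) => /=.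
by rewrite reverse_I0 reverse_I1.
Qed.

Lemma path_trans (a b c : A) : path_rel a b -> path_rel b c -> path_rel a c.
Proof.
move=> [p [pa pb]] [q [qb qc]].
have e : proj1_sig p I1 = proj1_sig q I0 by rewrite pb qb.
exists (exist _ (concat (proj1_sig p) (proj1_sig q)) (concat_pcont (proj2_sig p) (proj2_sig q) e)) => /=.
by rewrite concat_I0 concat_I1.
Qed.

Lemma pi0_proj_eq (a b : A) : path_rel a b -> pi0_proj a = pi0_proj b.
Proof.
move=> hab; apply: sig_eq => /=; apply/funext => c; apply/propext; rewrite /Defs.pcomp; split.
- by move=> hac; apply: path_trans (path_sym hab) hac.
- by move=> hbc; apply: path_trans hab hbc.
Qed.

Lemma pi0_proj_eqE (a b : A) : pi0_proj a = pi0_proj b -> path_rel a b.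
Proof.
move=> /(congr1 (@proj1_sig _ _)) /= e.
have : Defs.pcomp b b by exact: path_refl.
by rewrite -e.
Qed.

Lemma pi0_surj (C : pi0car A) : exists a, C = pi0_proj a.
Proof. case: C => C [a ea]; exists a; exact: sig_eq. Qed.

End PathRel.

Local Open Scope ring_scope.

Section Loops.
Variables (X : pstop) (x0 : X).
Hypothesis hX : pseudotopological X.

Local Notation Om := (loop_space x0).

Lemma lf_I0 (l : Om) : loop_fun l I0 = x0.
Proof. by case: (proj2_sig l). Qed.
Lemma lf_I1 (l : Om) : loop_fun l I1 = x0.
Proof. by case: (proj2_sig l). Qed.
Lemma lf_pcont (l : Om) : pcont (loop_fun l).
Proof. exact: (proj2_sig (proj1_sig l)). Qed.

Lemma loop_ext (l l' : Om) : loop_fun l = loop_fun l' -> l = l'.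
Proof. by move=> e; apply: sig_eq; apply: sig_eq. Qed.

Definition mkloop (f : I01 -> X) (hf : pcont f) (h0 : f I0 = x0) (h1 : f I1 = x0) : Om :=
  exist _ (exist _ f hf) (conj h0 h1).

Lemma mkloopE f hf h0 h1 : loop_fun (@mkloop f hf h0 h1) = f.
Proof. by []. Qed.

Lemma catL_ok (a b : Om) : loop_fun a I1 = loop_fun b I0.
Proof. by rewrite lf_I0 lf_I1. Qed.

Definition catL (a b : Om) : Om :=
  @mkloop (concat (loop_fun a) (loop_fun b)) (concat_pcont (lf_pcont a) (lf_pcont b) (catL_ok a b))
    (etrans (concat_I0 _ _) (lf_I0 a)) (etrans (concat_I1 _ _) (lf_I1 b)).

Definition revL (a : Om) : Om :=
  @mkloop (reverse (loop_fun a)) (reverse_pcont (lf_pcont a))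
    (etrans (reverse_I0 _) (lf_I1 a)) (etrans (reverse_I1 _) (lf_I0 a)).

Definition eL : Om := @mkloop (fun _ => x0) (pcont_const x0 I01_pseudo hX) erefl erefl.

Lemma Om_pseudo : pseudotopological Om.
Proof. exact/sub_pseudo/fs_pseudo. Qed.

Definition evF (V : set (set Om)) (G : set (set I01)) : set (set X) :=
  fun S => exists A B, V A /\ G B /\ (forall m u, A m -> B u -> S (loop_fun m u)).

Lemma evF_mono V G G' : G `<=` G' -> evF V G `<=` evF V G'.
Proof. by move=> s S [A [B [hA [hB h]]]]; exists A, B; split => //; split => //; apply: s. Qed.

Lemma evFE (V : set (set Om)) G : is_filter V ->
  pushforward (@evalc I01 X) (prod_filter (pushforward (@proj1_sig _ _) V) G) = evF V G.
Proof.
move=> hV; apply/funext => S; apply/propext; split.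
- move=> [A [B [hA [hB s]]]]; exists [set m : Om | A (proj1_sig m)], B; split => //; split => //.
  by move=> m u Am Bu; exact: (s (proj1_sig m, u) (conj Am Bu)).
- move=> [A [B [hA [hB s]]]].
  exists [set f | exists m, A m /\ proj1_sig m = f], B; split.
    by apply: (filter_S hV _ hA) => m Am; exists m.
  split => // -[f u] [/= [m [Am <-]] Bu]; exact: s.
Qed.

Lemma Om_conv (V : set (set Om)) (l : Om) :
  @ps_conv Om V l <-> is_ultrafilter V /\ forall G t, is_filter G -> fconv G t -> fconv (evF V G) (loop_fun l t).
Proof.
split.
- move=> [hV [_ h]]; split => // G t hG hGt; rewrite -evFE; last exact: ultra_filter.
  exact: h.
- move=> [hV h]; split => //; split; first exact: push_ultra.
  move=> G t hG hGt; rewrite evFE; last exact: ultra_filter.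
  exact: h.
Qed.

Lemma precomp (V V' : set (set Om)) (f : Om) (phi : I01 -> I01) (L : set I01)
    (G : set (set I01)) t (K : set (set X)) :
  @ps_conv Om V f -> pcont phi -> is_filter G -> fconv G t -> is_ultrafilter K ->
  (forall A, V A -> V' [set m' | exists m, A m /\ forall u, L u -> loop_fun m' u = loop_fun m (phi u)]) ->
  evF V' (fjoin G L) `<=` K -> @ps_conv X K (loop_fun f (phi t)).
Proof.
move=> /Om_conv [hV hf] hphi hG hGt hK hVV' sK.
have hGL := fjoin_filter L hG.
have hc : fconv (pushforward phi (fjoin G L)) (phi t).
  apply: fconv_push => //; apply: fconv_mono hGt; exact: fjoin_sub.
apply: (hf _ _ (push_filter phi hGL) hc) => //.
move=> S [A [B [hA [hB h]]]]; apply: sK.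
exists [set m' | exists m, A m /\ forall u, L u -> loop_fun m' u = loop_fun m (phi u)].
exists (phi @^-1` B `&` L); split; first exact: hVV'.
split; first by apply: filter_I => //; exact: fjoin_L.
by move=> m' u [m [Am e]] [Bu Lu]; rewrite e //; apply: h.
Qed.

Lemma evF_set0 V G : is_filter V -> G set0 -> evF V G set0.
Proof. by move=> hV hG; exists setT, set0; split; [exact: filter_T|split => //]. Qed.

Lemma catL_cont : pcont (X := prod_space Om Om) (Y := Om) (fun p => catL p.1 p.2).
Proof.
move=> W [a b] [hW [ha hb]]; apply/Om_conv; split; first exact: push_ultra.
move=> G t hG hGt K hK sK.
pose V' := pushforward (fun p : Om * Om => catL p.1 p.2) W.
have hV' : is_filter V' by apply: push_filter; exact: ultra_filter.
have split_case : evF V' (fjoin G Lh) `<=` K \/ evF V' (fjoin G (~` Lh)) `<=` K.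
  apply: contrapT => /not_orP [/existsNP [S1 /not_implyP [h1 n1]] /existsNP [S2 /not_implyP [h2 n2]]].
  have : K (S1 `|` S2).
    apply: sK.
    move: h1 h2 => [A1 [B1 [hA1 [[B1' [hB1' sB1]] e1]]]] [A2 [B2 [hA2 [[B2' [hB2' sB2]] e2]]]].
    exists (A1 `&` A2), (B1' `&` B2'); split; first exact: filter_I.
    split; first exact: filter_I.
    move=> m u [Am1 Am2] [Bu1 Bu2]; case: (pselect (Lh u)) => hu.
    + by left; apply: e1 => //; apply: sB1.
    + by right; apply: e2 => //; apply: sB2.
  by case/(ultra_U hK).
case: split_case => sK'.
- case: (pselect (Lh t)) => ht; last first.
    exfalso; apply: (ultra_0 hK); apply: sK'; apply: evF_set0 => //.
    have hGt' := (I01_fconv t hG).1 hGt.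
    have hn : vI t > 2^-1 by rewrite /Lh /= in ht; lra.
    exists (vI @^-1` [set y | 2^-1 < y]); split; first exact/hGt'/near_gt.
    by move=> u [/= h1 h2]; rewrite /Lh /= in h2; lra.
  rewrite /= /catL mkloopE concat_L //.
  apply: (precomp (V := pushforward fst W)) sK' => //; first exact: d1_pcont.
  move=> A hA; apply: (filter_S (ultra_filter hW) _ hA) => -[m1 m2] /= Am1.
  by exists m1; split => // u hu; rewrite mkloopE concat_L.
- case: (pselect (vI t < 2^-1)) => ht.
    exfalso; apply: (ultra_0 hK); apply: sK'; apply: evF_set0 => //.
    have hGt' := (I01_fconv t hG).1 hGt.
    exists (vI @^-1` [set y | y < 2^-1]); split; first exact/hGt'/near_lt.
    by move=> u [/= h1 h2]; apply: h2; rewrite /Lh /=; lra.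
  have -> : loop_fun (catL (a, b).1 (a, b).2) t = loop_fun b (d2 t).
    rewrite /= mkloopE; case: (pselect (Lh t)) => hL; last exact: concat_R.
    have h2 : vI t = 2^-1 by rewrite /Lh /= in hL; lra.
    by rewrite concat_L // d1_half // d2_half // lf_I1 lf_I0.
  apply: (precomp (V := pushforward snd W)) sK' => //; first exact: d2_pcont.
  move=> A hA; apply: (filter_S (ultra_filter hW) _ hA) => -[m1 m2] /= Am2.
  by exists m2; split => // u hu; rewrite mkloopE concat_R.
Qed.

Lemma revL_cont : pcont (X := Om) (Y := Om) revL.
Proof.
move=> V a ha; have hV : is_ultrafilter V by case: ha.
apply/Om_conv; split; first exact: push_ultra.
move=> G t hG hGt K hK sK.
rewrite /revL mkloopE /reverse -/(rv t).
apply: (precomp (V := V) (V' := pushforward revL V) (L := setT) (G := G) (K := K)) => //; first exact: rv_pcont.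
- move=> A hA; apply: (filter_S (ultra_filter hV) _ hA) => m /= Am.
  by exists m; split => // u _.
- apply: subset_trans sK; apply: evF_mono => S [B [hB sB]].
  by apply: (filter_S hG _ hB) => u Bu; apply: sB.
Qed.

Lemma homotopy (m : Om) (Phi : I01 -> I01 -> I01) (K : Rl) : 0 < K ->
  (forall s t s' t', `|vI (Phi s t) - vI (Phi s' t')| <= K * (`|vI s - vI s'| + `|vI t - vI t'|)) ->
  (forall s, loop_fun m (Phi s I0) = x0) -> (forall s, loop_fun m (Phi s I1) = x0) ->
  forall a b : Om, loop_fun a = (fun u => loop_fun m (Phi I0 u)) ->
    loop_fun b = (fun u => loop_fun m (Phi I1 u)) -> path_rel a b.
Proof.
move=> K0 hP h0 h1 a b ea eb.
have hPs : forall s, pcont (Phi s).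
  move=> s; apply: (lip1 K0) => u v; apply: le_trans (hP s u s v) _.
  by rewrite subrr normr0 add0r.
pose H (s : I01) : Om := @mkloop (fun u => loop_fun m (Phi s u))
  (pcont_comp (hPs s) (lf_pcont m)) (h0 s) (h1 s).
have hH : pcont (X := I01) (Y := Om) H.
  move=> V s hVs; have hV : is_ultrafilter V by case: hVs.
  apply/Om_conv; split; first exact: push_ultra.
  move=> G t hG hGt K' hK' sK'.
  pose pi := fun p : I01 * I01 => loop_fun m (Phi p.1 p.2).
  have sub : pushforward pi (prod_filter V G) `<=` K'.
    move=> S [A [B [hA [hB sAB]]]]; apply: sK'.
    exists [set h : Om | forall u, B u -> S (loop_fun h u)], B; split.
      apply: (filter_S (ultra_filter hV) _ hA) => s' As' u Bu.
      exact: (sAB (s', u) (conj As' Bu)).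
    by split => // h u; apply.
  have [W [hW [sW eW]]] := ultra_lift (prod_filter_filter (ultra_filter hV) hG) hK' sub.
  rewrite -eW.
  have e1 : pushforward fst W = V by apply: ultra_fst_prod sW.
  have c2 : @ps_conv I01 (pushforward snd W) t.
    apply: hGt; first exact: push_ultra.
    move=> S hS; apply: sW; exact: (prod_snd (ultra_filter hV) hS).
  have c1 : @ps_conv I01 (pushforward fst W) s by rewrite e1.
  have := lip2 K0 hP hW c1 c2.
  exact: (lf_pcont m).
exists (exist _ H hH) => /=; split; apply: loop_ext; rewrite mkloopE.
- by rewrite ea.
- by rewrite eb.
Qed.

End Loops.

Local Open Scope ring_scope.

Lemma lip_min2 (x1 x2 y1 y2 : Rl) :
  `|Num.min x1 x2 - Num.min y1 y2| <= `|x1 - y1| + `|x2 - y2|.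
Proof.
have h1 := ler_norm (x1 - y1). have h2 := ler_norm (y1 - x1). rewrite distrC in h2.
have h3 := ler_norm (x2 - y2). have h4 := ler_norm (y2 - x2). rewrite distrC in h4.
rewrite ler_norml.
case: (leP x1 x2) => ?; case: (leP y1 y2) => ?; apply/andP; split; lra.
Qed.
Lemma lip_max2 (x1 x2 y1 y2 : Rl) :
  `|Num.max x1 x2 - Num.max y1 y2| <= `|x1 - y1| + `|x2 - y2|.
Proof.
have h1 := ler_norm (x1 - y1). have h2 := ler_norm (y1 - x1). rewrite distrC in h2.
have h3 := ler_norm (x2 - y2). have h4 := ler_norm (y2 - x2). rewrite distrC in h4.
rewrite ler_norml.
case: (leP x1 x2) => ?; case: (leP y1 y2) => ?; apply/andP; split; lra.
Qed.

Lemma min3_1 (x y z : Rl) : x <= y -> x <= z -> Num.min (Num.min x y) z = x.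
Proof. by move=> h1 h2; rewrite (min_l h1) min_l. Qed.
Lemma min3_2 (x y z : Rl) : y <= x -> y <= z -> Num.min (Num.min x y) z = y.
Proof. by move=> h1 h2; rewrite (min_r h1) min_l. Qed.
Lemma min3_3 (x y z : Rl) : z <= x -> z <= y -> Num.min (Num.min x y) z = z.
Proof. by move=> h1 h2; rewrite min_r // le_min h1 h2. Qed.

Lemma LhE (w : I01) : Lh w = (vI w <= 2^-1).
Proof. by []. Qed.

Lemma vcl_eq (r : Rl) : 0 <= r <= 1 -> vI (clampI r) = r.
Proof. exact: vclamp. Qed.

Lemma vclampE r : vI (clampI r) = Num.max 0 (Num.min 1 r).
Proof. by []. Qed.

Ltac bnd u := have := vI_ge0 u; have := vI_le1 u.
Ltac vc := rewrite vclamp; last (apply/andP; split; lra).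

Lemma vd1 u : vI u <= 2^-1 -> vI (d1 u) = 2 * vI u.
Proof. by move=> h; bnd u => ? ?; rewrite /d1; vc. Qed.
Lemma vd1' u : 2^-1 <= vI u -> d1 u = I1.
Proof. move=> h; apply: vI_inj; rewrite vI1 /d1 vclampE min_l; [rewrite max_r //; lra | lra]. Qed.
Lemma vd2 u : 2^-1 <= vI u -> vI (d2 u) = 2 * vI u - 1.
Proof. by move=> h; bnd u => ? ?; rewrite /d2; vc. Qed.
Lemma vd2' u : vI u <= 2^-1 -> d2 u = I0.
Proof. move=> h; apply: vI_inj; bnd u => ? ?; rewrite vI0 /d2 vclampE min_r; [rewrite max_l //; lra | lra]. Qed.
Lemma vrv u : vI (rv u) = 1 - vI u.
Proof. by bnd u => ? ?; rewrite /rv; vc. Qed.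

Definition fA (t : I01) : I01 := clampI (Num.min (Num.min (2 * vI t) (vI t + 4^-1)) ((vI t + 1) / 2)).
Definition fI (t : I01) : I01 := clampI (Num.min (2 * vI t) (2 - 2 * vI t)).
Definition fI' (t : I01) : I01 := clampI (Num.max (1 - 2 * vI t) (2 * vI t - 1)).

Definition lip4 (f : I01 -> I01) := forall u v, `|vI (f u) - vI (f v)| <= 4 * `|vI u - vI v|.

Lemma lip4_id : lip4 (fun t => t).
Proof. move=> u v; have := normr_ge0 (vI u - vI v); lra. Qed.
Lemma lip4_const c : lip4 (fun _ => c).
Proof. move=> u v; rewrite subrr normr0; have := normr_ge0 (vI u - vI v); lra. Qed.
Lemma lip4_d1 : lip4 d1.
Proof.
move=> u v; apply: le_trans (clamp_lip _ _) _.
rewrite -mulrBr normrM ger0_norm //; have := normr_ge0 (vI u - vI v); lra.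
Qed.
Lemma lip4_d2 : lip4 d2.
Proof.
move=> u v; apply: le_trans (clamp_lip _ _) _.
have -> : 2 * vI u - 1 - (2 * vI v - 1) = 2 * (vI u - vI v) by ring.
rewrite normrM ger0_norm //; have := normr_ge0 (vI u - vI v); lra.
Qed.
Lemma lip4_fA : lip4 fA.
Proof.
move=> u v; apply: le_trans (clamp_lip _ _) _.
apply: le_trans (lip_min2 _ _ _ _) _.
have e1 : 2 * vI u - 2 * vI v = 2 * (vI u - vI v) by ring.
have e2 : vI u + 4^-1 - (vI v + 4^-1) = vI u - vI v by ring.
have e3 : (vI u + 1) / 2 - (vI v + 1) / 2 = 2^-1 * (vI u - vI v) by field.
have i1 := lip_min2 (2 * vI u) (vI u + 4^-1) (2 * vI v) (vI v + 4^-1).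
have n1 : `|2 * vI u - 2 * vI v| = 2 * `|vI u - vI v| by rewrite e1 normrM ger0_norm.
have n3 : `|(vI u + 1) / 2 - (vI v + 1) / 2| = 2^-1 * `|vI u - vI v|.
  by rewrite e3 normrM ger0_norm // invr_ge0.
rewrite n1 e2 in i1; rewrite n3.
have := normr_ge0 (vI u - vI v); lra.
Qed.
Lemma lip4_fI : lip4 fI.
Proof.
move=> u v; apply: le_trans (clamp_lip _ _) _.
apply: le_trans (lip_min2 _ _ _ _) _.
have e1 : 2 * vI u - 2 * vI v = 2 * (vI u - vI v) by ring.
have e2 : 2 - 2 * vI u - (2 - 2 * vI v) = - (2 * (vI u - vI v)) by ring.
rewrite e1 e2 normrN normrM ger0_norm //; have := normr_ge0 (vI u - vI v); lra.
Qed.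
Lemma lip4_fI' : lip4 fI'.
Proof.
move=> u v; apply: le_trans (clamp_lip _ _) _.
apply: le_trans (lip_max2 _ _ _ _) _.
have e1 : 2 * vI u - 1 - (2 * vI v - 1) = 2 * (vI u - vI v) by ring.
have e2 : 1 - 2 * vI u - (1 - 2 * vI v) = - (2 * (vI u - vI v)) by ring.
rewrite e1 e2 normrN normrM ger0_norm //; have := normr_ge0 (vI u - vI v); lra.
Qed.

Definition linhom (phi psi : I01 -> I01) (s t : I01) : I01 :=
  clampI ((1 - vI s) * vI (phi t) + vI s * vI (psi t)).

Lemma linhom_lip phi psi : lip4 phi -> lip4 psi ->
  forall s t s' t', `|vI (linhom phi psi s t) - vI (linhom phi psi s' t')| <=
     9 * (`|vI s - vI s'| + `|vI t - vI t'|).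
Proof.
move=> hp hq s t s' t'; apply: le_trans (clamp_lip _ _) _.
set a := vI (phi t); set a' := vI (phi t'); set b := vI (psi t); set b' := vI (psi t').
have e : (1 - vI s) * a + vI s * b - ((1 - vI s') * a' + vI s' * b') =
   (1 - vI s) * (a - a') + vI s * (b - b') + (vI s' - vI s) * (a' - b') by ring.
rewrite e; apply: le_trans (ler_normD _ _) _.
apply: le_trans (lerD (ler_normD _ _) (lexx _)) _.
rewrite !normrM.
have ha := hp t t'; have hb := hq t t'; rewrite -/a -/a' in ha; rewrite -/b -/b' in hb.
have n1 : `|1 - vI s| <= 1 by bnd s => ? ?; rewrite ger0_norm; lra.
have n2 : `|vI s| <= 1 by bnd s => ? ?; rewrite ger0_norm; lra.
have n3 : `|a' - b'| <= 1.
  bnd (phi t') => ? ?; bnd (psi t') => ? ?; rewrite /a' /b' ler_norml; apply/andP; split; lra.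
have m1 : `|1 - vI s| * `|a - a'| <= `|a - a'| by apply: ler_piMl.
have m2 : `|vI s| * `|b - b'| <= `|b - b'| by apply: ler_piMl.
have m3 : `|vI s' - vI s| * `|a' - b'| <= `|vI s' - vI s| by apply: ler_piMr.
have m4 : `|vI s' - vI s| = `|vI s - vI s'| by rewrite distrC.
have := normr_ge0 (vI s - vI s'); have := normr_ge0 (vI t - vI t'); lra.
Qed.

Local Open Scope ring_scope.


Lemma vd1E u r : vI u = r -> r <= 2^-1 -> vI (d1 u) = 2 * r.
Proof. by move=> <- h; apply: vd1. Qed.
Lemma vd2E u r : vI u = r -> 2^-1 <= r -> vI (d2 u) = 2 * r - 1.
Proof. by move=> <- h; apply: vd2. Qed.
Lemma LhT u r : vI u = r -> r <= 2^-1 -> Lh u.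
Proof. by move=> e h; rewrite LhE e. Qed.
Lemma LhF u r : vI u = r -> 2^-1 < r -> ~ Lh u.
Proof. by move=> e h; rewrite LhE e => h'; lra. Qed.

Lemma vfA1 u : vI u <= 4^-1 -> vI (fA u) = 2 * vI u.
Proof. move=> h; bnd u => ? ?; rewrite /fA min3_1; [vc|lra|lra]; done. Qed.
Lemma vfA2 u : 4^-1 <= vI u -> vI u <= 2^-1 -> vI (fA u) = vI u + 4^-1.
Proof. move=> h h'; bnd u => ? ?; rewrite /fA min3_2; [vc|lra|lra]; done. Qed.
Lemma vfA3 u : 2^-1 <= vI u -> vI (fA u) = (vI u + 1) / 2.
Proof. move=> h; bnd u => ? ?; rewrite /fA min3_3; [vc|lra|lra]; done. Qed.
Lemma vfI1 u : vI u <= 2^-1 -> vI (fI u) = 2 * vI u.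
Proof. move=> h; bnd u => ? ?; rewrite /fI min_l; [vc|lra]; done. Qed.
Lemma vfI2 u : 2^-1 <= vI u -> vI (fI u) = 2 - 2 * vI u.
Proof. move=> h; bnd u => ? ?; rewrite /fI min_r; [vc|lra]; done. Qed.
Lemma vfI'1 u : vI u <= 2^-1 -> vI (fI' u) = 1 - 2 * vI u.
Proof. move=> h; bnd u => ? ?; rewrite /fI' max_l; [vc|lra]; done. Qed.
Lemma vfI'2 u : 2^-1 <= vI u -> vI (fI' u) = 2 * vI u - 1.
Proof. move=> h; bnd u => ? ?; rewrite /fI' max_r; [vc|lra]; done. Qed.

Lemma fA_0 : fA I0 = I0.
Proof. by apply: vI_inj; rewrite vfA1 vI0 //; lra. Qed.
Lemma fA_1 : fA I1 = I1.
Proof. by apply: vI_inj; rewrite vfA3 vI1 //; lra. Qed.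
Lemma fI_0 : fI I0 = I0.
Proof. by apply: vI_inj; rewrite vfI1 vI0 //; lra. Qed.
Lemma fI_1 : fI I1 = I0.
Proof. by apply: vI_inj; rewrite vfI2 vI1 ?vI0 //; lra. Qed.
Lemma fI'_0 : fI' I0 = I1.
Proof. by apply: vI_inj; rewrite vfI'1 vI0 ?vI1 //; lra. Qed.
Lemma fI'_1 : fI' I1 = I1.
Proof. by apply: vI_inj; rewrite vfI'2 vI1 //; lra. Qed.
Lemma d1_1 : d1 I1 = I1.
Proof. by apply: vd1'; rewrite vI1; lra. Qed.
Lemma d2_0 : d2 I0 = I0.
Proof. by apply: vd2'; rewrite vI0; lra. Qed.

Lemma linhom_0 phi psi t : linhom phi psi I0 t = phi t.
Proof. by rewrite /linhom vI0 subr0 mul1r mul0r addr0 clampI_v. Qed.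
Lemma linhom_1 phi psi t : linhom phi psi I1 t = psi t.
Proof. by rewrite /linhom vI1 subrr mul0r mul1r add0r clampI_v. Qed.
Lemma linhom_end phi psi s c : phi c = psi c -> linhom phi psi s c = phi c.
Proof.
move=> e; rewrite /linhom e; apply: vI_inj; rewrite vclampE.
have -> : (1 - vI s) * vI (psi c) + vI s * vI (psi c) = vI (psi c) by ring.
by rewrite -vclampE clampI_v.
Qed.

Section Group.
Variables (X : pstop) (x0 : X).
Hypothesis hX : pseudotopological X.
Local Notation Om := (loop_space x0).
Local Notation catL := (@catL X x0).
Local Notation revL := (@revL X x0).
Local Notation eL := (@eL X x0 hX).

Lemma path_reparam (m : Om) (phi psi : I01 -> I01) : lip4 phi -> lip4 psi ->
  phi I0 = psi I0 -> phi I1 = psi I1 ->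
  loop_fun m (phi I0) = x0 -> loop_fun m (phi I1) = x0 ->
  forall a b : Om, loop_fun a = (fun u => loop_fun m (phi u)) ->
    loop_fun b = (fun u => loop_fun m (psi u)) -> path_rel a b.
Proof.
move=> lp lq e0 e1 h0 h1 a b ea eb.
apply: (@homotopy X x0 m (linhom phi psi) 9) => //.
- exact: linhom_lip.
- by move=> s; rewrite linhom_end.
- by move=> s; rewrite linhom_end.
- by apply/funext => u; rewrite ea linhom_0.
- by apply/funext => u; rewrite eb linhom_1.
Qed.

Lemma assoc_path (a b c : Om) : path_rel (catL (catL a b) c) (catL a (catL b c)).
Proof.
apply: (path_reparam (m := catL a (catL b c)) (phi := fA) (psi := fun t => t)).
- exact: lip4_fA.
- exact: lip4_id.
- exact: fA_0.
- exact: fA_1.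
- by rewrite fA_0 lf_I0.
- by rewrite fA_1 lf_I1.
- apply/funext => u; rewrite /catL !mkloopE; bnd u => g0 g1.
  have [h1|h1] := leP (vI u) 4^-1.
  + have w1 : vI (d1 u) = 2 * vI u by apply: vd1; lra.
    have w2 := vfA1 h1.
    rewrite [LHS]concat_L; last by apply: (LhT erefl); lra.
    rewrite [LHS]concat_L; last by apply: (LhT w1); lra.
    rewrite [RHS]concat_L; last by apply: (LhT w2); lra.
    congr (loop_fun a _); apply: vI_inj; rewrite (vd1E w1) ?(vd1E w2); lra.
  have [h2|h2] := leP (vI u) 2^-1.
  + have w1 : vI (d1 u) = 2 * vI u by apply: vd1; lra.
    have w2 : vI (fA u) = vI u + 4^-1 by apply: vfA2; lra.
    have w3 : vI (d2 (fA u)) = 2 * (vI u + 4^-1) - 1 by apply: (vd2E w2); lra.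
    rewrite [LHS]concat_L; last by apply: (LhT erefl); lra.
    rewrite [LHS]concat_R; last by apply: (LhF w1); lra.
    rewrite [RHS]concat_R; last by apply: (LhF w2); lra.
    rewrite [RHS]concat_L; last by apply: (LhT w3); lra.
    congr (loop_fun b _); apply: vI_inj; rewrite (vd2E w1) ?(vd1E w3); lra.
  + have w2 : vI (fA u) = (vI u + 1) / 2 by apply: vfA3; lra.
    have w3 : vI (d2 (fA u)) = 2 * ((vI u + 1) / 2) - 1 by apply: (vd2E w2); lra.
    rewrite [LHS]concat_R; last by apply: (LhF erefl); lra.
    rewrite [RHS]concat_R; last by apply: (LhF w2); lra.
    rewrite [RHS]concat_R; last by apply: (LhF w3); lra.
    congr (loop_fun c _); apply: vI_inj; rewrite (vd2E erefl) ?(vd2E w3); lra.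
- by [].
Qed.

Lemma lid_path (a : Om) : path_rel (catL eL a) a.
Proof.
apply: (path_reparam (m := a) (phi := d2) (psi := fun t => t)).
- exact: lip4_d2.
- exact: lip4_id.
- exact: d2_0.
- exact: d2_1.
- by rewrite d2_0 lf_I0.
- by rewrite d2_1 lf_I1.
- apply/funext => u; rewrite /catL !mkloopE.
  case: (pselect (Lh u)) => hu.
  + by rewrite concat_L // vd2' ?lf_I0.
  + by rewrite concat_R.
- by [].
Qed.

Lemma rid_path (a : Om) : path_rel (catL a eL) a.
Proof.
apply: (path_reparam (m := a) (phi := d1) (psi := fun t => t)).
- exact: lip4_d1.
- exact: lip4_id.
- exact: d1_0.
- exact: d1_1.
- by rewrite d1_0 lf_I0.
- by rewrite d1_1 lf_I1.
- apply/funext => u; rewrite /catL !mkloopE.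
  case: (pselect (Lh u)) => hu.
  + by rewrite concat_L.
  + rewrite concat_R // vd1' ?lf_I1 //; rewrite LhE in hu; lra.
- by [].
Qed.

Lemma rinv_path (a : Om) : path_rel (catL a (revL a)) eL.
Proof.
apply: (path_reparam (m := a) (phi := fI) (psi := fun _ => I0)).
- exact: lip4_fI.
- exact: lip4_const.
- exact: fI_0.
- exact: fI_1.
- by rewrite fI_0 lf_I0.
- by rewrite fI_1 lf_I0.
- apply/funext => u; rewrite /catL /revL !mkloopE; bnd u => g0 g1.
  case: (pselect (Lh u)) => hu; rewrite LhE in hu.
  + rewrite concat_L //; congr (loop_fun a _); apply: vI_inj.
    by rewrite vd1 // vfI1.
  + have hu' : 2^-1 <= vI u by lra.
    rewrite concat_R; last by rewrite LhE.
    rewrite /reverse; congr (loop_fun a _); apply: vI_inj.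
    change (vI (rv (d2 u)) = vI (fI u)).
    rewrite vrv (vd2E erefl) // vfI2 //; lra.
- by apply/funext => u; rewrite /eL mkloopE lf_I0.
Qed.

Lemma linv_path (a : Om) : path_rel (catL (revL a) a) eL.
Proof.
apply: (path_reparam (m := a) (phi := fI') (psi := fun _ => I1)).
- exact: lip4_fI'.
- exact: lip4_const.
- exact: fI'_0.
- exact: fI'_1.
- by rewrite fI'_0 lf_I1.
- by rewrite fI'_1 lf_I1.
- apply/funext => u; rewrite /catL /revL !mkloopE; bnd u => g0 g1.
  case: (pselect (Lh u)) => hu; rewrite LhE in hu.
  + rewrite concat_L //; rewrite /reverse; congr (loop_fun a _); apply: vI_inj.
    change (vI (rv (d1 u)) = vI (fI' u)).
    by rewrite vrv vd1 // vfI'1.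
  + have hu' : 2^-1 <= vI u by lra.
    rewrite concat_R; last by rewrite LhE.
    congr (loop_fun a _); apply: vI_inj.
    by rewrite vd2 // vfI'2.
- by apply/funext => u; rewrite /eL mkloopE lf_I1.
Qed.
End Group.

Local Open Scope ring_scope.

Section Pi0.
Variables (X : pstop) (x0 : X).
Hypothesis hX : pseudotopological X.
Local Notation Om := (loop_space x0).
Local Notation P := (pi0car Om).
Local Notation q := (@pi0_proj Om).
Local Notation catL := (@catL X x0).
Local Notation revL := (@revL X x0).
Local Notation eL := (@eL X x0 hX).

Definition reprL (C : P) : Om := proj1_sig (cid (pi0_surj C)).
Lemma repr_spec (C : P) : C = q (reprL C).
Proof. exact: (proj2_sig (cid (pi0_surj C))). Qed.

Lemma repr_path (a : Om) : path_rel (reprL (q a)) a.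
Proof. apply: (pi0_proj_eqE (Om_pseudo x0)); by rewrite -repr_spec. Qed.

Definition mulP (C D : P) : P := q (catL (reprL C) (reprL D)).
Definition invP (C : P) : P := q (revL (reprL C)).
Definition eP : P := q eL.

Lemma cat_wd (a a' b b' : Om) : path_rel a a' -> path_rel b b' ->
  path_rel (catL a b) (catL a' b').
Proof.
move=> [p [pa pb]] [r [ra rb]].
have hH : pcont (X := I01) (Y := Om) (fun s => catL (proj1_sig p s) (proj1_sig r s)).
  apply: (pcont_comp (Y := prod_space Om Om) (f := fun s => (proj1_sig p s, proj1_sig r s))
     _ (@catL_cont X x0)).
  exact: (pcont_pair I01_pseudo (proj2_sig p) (proj2_sig r)).
by exists (exist _ _ hH) => /=; rewrite pa pb ra rb.
Qed.

Lemma rev_wd (a a' : Om) : path_rel a a' -> path_rel (revL a) (revL a').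
Proof.
move=> [p [pa pb]].
have hH : pcont (X := I01) (Y := Om) (fun s => revL (proj1_sig p s)).
  exact: (pcont_comp (proj2_sig p) (@revL_cont X x0)).
by exists (exist _ _ hH) => /=; rewrite pa pb.
Qed.

Lemma mulP_q (a b : Om) : mulP (q a) (q b) = q (catL a b).
Proof. by apply: pi0_proj_eq; apply: cat_wd; apply: repr_path. Qed.
Lemma invP_q (a : Om) : invP (q a) = q (revL a).
Proof. by apply: pi0_proj_eq; apply: rev_wd; apply: repr_path. Qed.

Lemma group_laws :
  (forall a b c, mulP a (mulP b c) = mulP (mulP a b) c) /\
  (forall a, mulP eP a = a /\ mulP a eP = a) /\
  (forall a, mulP (invP a) a = eP /\ mulP a (invP a) = eP).
Proof.
split; last split.
- move=> A B C; rewrite (repr_spec A) (repr_spec B) (repr_spec C) !mulP_q.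
  by apply: pi0_proj_eq; apply: path_sym; apply: assoc_path.
- move=> A; rewrite (repr_spec A) /eP !mulP_q; split; apply: pi0_proj_eq.
  + exact: lid_path.
  + exact: rid_path.
- move=> A; rewrite (repr_spec A) invP_q !mulP_q; split; apply: pi0_proj_eq.
  + exact: linv_path.
  + exact: rinv_path.
Qed.

Lemma ops_ok : loop_ops_ok mulP invP.
Proof.
split; last split; last split.
- by move=> l l'; exists (catL l l').
- by move=> l; exists (revL l).
- move=> l l' m e; rewrite mulP_q; congr q; apply: loop_ext; by rewrite e.
- move=> l m e; rewrite invP_q; congr q; apply: loop_ext; by rewrite e.
Qed.

Local Notation Ps := (pi0_ps Om).

Lemma Ps_pseudo : pseudotopological Ps.
Proof.
split; last by move=> C; left.
move=> U C [->|[V [a [hV [_ ->]]]]]; first exact: principal_ultra.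
apply: push_ultra; exact: (Om_pseudo x0).1 _ _ hV.
Qed.

Lemma Ps_lift (U : set (set P)) (C : P) : @ps_conv Ps U C ->
  exists V a, @ps_conv Om V a /\ C = q a /\ U = pushforward q V.
Proof.
case=> [->|[V [a [hV [eC eU]]]]]; last by exists V, a.
exists (principal (reprL C)), (reprL C); split; first exact: (Om_pseudo x0).2.
by split; [exact: repr_spec| rewrite push_principal -repr_spec].
Qed.

Lemma prod_lift (A : Type) (qa : A -> P) (W : set (set (P * P))) (V1 V2 : set (set A)) :
  is_ultrafilter W -> is_ultrafilter V1 -> is_ultrafilter V2 ->
  pushforward fst W = pushforward qa V1 -> pushforward snd W = pushforward qa V2 ->
  exists W', is_ultrafilter W' /\ pushforward fst W' = V1 /\ pushforward snd W' = V2 /\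
     pushforward (fun p => (qa p.1, qa p.2)) W' = W.
Proof.
move=> hW h1 h2 e1 e2.
have sub : pushforward (fun p : A * A => (qa p.1, qa p.2)) (prod_filter V1 V2) `<=` W.
  move=> S [A1 [B1 [hA [hB s]]]].
  have w1 : W [set p | (qa @` A1) p.1].
    change (pushforward fst W (qa @` A1)); rewrite e1.
    by apply: (ultra_S h1 _ hA) => x Ax; exists x.
  have w2 : W [set p | (qa @` B1) p.2].
    change (pushforward snd W (qa @` B1)); rewrite e2.
    by apply: (ultra_S h2 _ hB) => x Ax; exists x.
  apply: (ultra_S hW _ (ultra_I hW w1 w2)) => -[c d] [/= [x Ax <-] [y By <-]].
  exact: (s (x, y) (conj Ax By)).
have [W' [hW' [sW' eW']]] := ultra_lift (prod_filter_filter (ultra_filter h1) (ultra_filter h2)) hW sub.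
exists W'; split => //; split; first exact: (ultra_fst_prod h1 (ultra_filter h2) hW' sW').
split => //; exact: (ultra_snd_prod (ultra_filter h1) h2 hW' sW').
Qed.

Lemma Ps_mul_cont : pcont (X := prod_space Ps Ps) (Y := Ps) (fun p => mulP p.1 p.2).
Proof.
move=> W [C D] [hW [h1 h2]].
have [V1 [a [c1 [eC e1]]]] := Ps_lift h1.
have [V2 [b [c2 [eD e2]]]] := Ps_lift h2.
have hV1 : is_ultrafilter V1 by exact: (Om_pseudo x0).1 _ _ c1.
have hV2 : is_ultrafilter V2 by exact: (Om_pseudo x0).1 _ _ c2.
have [W' [hW' [f1 [f2 eW]]]] := prod_lift hW hV1 hV2 e1 e2.
right; exists (pushforward (fun p => catL p.1 p.2) W'), (catL a b); split.
  apply: (@catL_cont X x0 W' (a, b)); split => //; split; by [rewrite f1 | rewrite f2].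
split; first by rewrite eC eD mulP_q.
rewrite -eW; apply/funext => S; rewrite /pushforward; congr W'.
by apply/funext => -[m1 m2] /=; rewrite mulP_q.
Qed.

Lemma Ps_inv_cont : pcont (X := Ps) (Y := Ps) invP.
Proof.
move=> U C hU; have [V [a [c [eC eU]]]] := Ps_lift hU.
right; exists (pushforward revL V), (revL a); split; first exact: (@revL_cont X x0).
split; first by rewrite eC invP_q.
rewrite eU; apply/funext => S; rewrite /pushforward; congr V.
by apply/funext => m /=; rewrite invP_q.
Qed.

Lemma Ps_group : ps_group (G := Ps) mulP invP eP.
Proof.
have [h1 [h2 h3]] := group_laws.
split; first exact: Ps_pseudo.
do 3 (split => //).
split; [exact: Ps_mul_cont | exact: Ps_inv_cont].
Qed.

End Pi0.

Lemma top_pseudo (T : topologicalType) : pseudotopological (ps_of_top T).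
Proof.
split; first by move=> U x [].
by move=> x; split; [exact: principal_ultra| move=> A hA; exact: nbhs_singleton].
Qed.

Lemma nbhs_prodE (D T : topologicalType) (p : D * T) (N : set (D * T)) :
  nbhs p N <-> exists A B, nbhs p.1 A /\ nbhs p.2 B /\ A `*` B `<=` N.
Proof.
split.
- by move=> [[A B] /= [hA hB] s]; exists A, B.
- by move=> [A [B [hA [hB s]]]]; exists (A, B).
Qed.

Definition Tuy (Y : Type) (U : set (set Y)) (y : Y) : Type := Y.
Section TuyTop.
Variables (Y : Type) (U : set (set Y)) (y : Y).
HB.instance Definition _ := gen_eqMixin (Tuy U y).
HB.instance Definition _ := gen_choiceMixin (Tuy U y).
Definition tnbhs (p : Tuy U y) : set (set (Tuy U y)) :=
  fun A => A p /\ (p = y -> is_ultrafilter U -> U A).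
HB.instance Definition _ := hasNbhs.Build (Tuy U y) tnbhs.
Lemma tnbhs_filter (p : Tuy U y) : ProperFilter (tnbhs p).
Proof.
apply: Build_ProperFilter; first by case.
split.
- by split => // _ hU; exact: ultra_T.
- by move=> A B [a ha] [b hb]; split => // e hU; apply: ultra_I => //; [exact: ha|exact: hb].
- move=> A B sAB [a ha]; split; first exact: sAB.
  by move=> e hU; apply: (ultra_S hU sAB); exact: ha.
Qed.
Lemma tnbhs_singleton (p : Tuy U y) (A : set (Tuy U y)) : tnbhs p A -> A p.
Proof. by case. Qed.
Lemma tnbhs_nbhs (p : Tuy U y) (A : set (Tuy U y)) : tnbhs p A -> tnbhs p (tnbhs^~ A).
Proof.
move=> [a ha]; split; first by split.
move=> e hU; apply: (ultra_S hU _ (ha e hU)) => q Aq; split => // eq _.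
exact: ha.
Qed.
HB.instance Definition _ := Nbhs_isNbhsTopological.Build (Tuy U y) tnbhs_filter tnbhs_singleton tnbhs_nbhs.

Lemma nbhs_TuyE (p : Tuy U y) : nbhs p = tnbhs p.
Proof. by []. Qed.
End TuyTop.

Section TuyConv.
Variables (Y : pstop) (U : set (set Y)) (y : Y).
Hypothesis hY : pseudotopological Y.
Hypothesis hUy : ps_conv U y.

Lemma Tuy_conv (V : set (set Y)) (t : Y) :
  @ps_conv (ps_of_top (Tuy U y)) V t -> ps_conv V t.
Proof.
move=> [hV hn]; have hU : is_ultrafilter U := hY.1 _ _ hUy.
case: (pselect (t = y)) => ety.
- subst t; case: (pselect (U `<=` V)) => sUV.
    have -> : V = U by apply: ultra_max => //; [exact: ultra_filter| exact: ultra_0].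
    exact: hUy.
  move: sUV => /existsNP [A /not_implyP [hA nA]].
  have hC : V (~` A) by case: (ultra_C A hV).
  have h1 : V ([set y] `|` A).
    apply: hn; rewrite nbhs_TuyE; split; first by left.
    by move=> _ _; apply: (ultra_S hU _ hA) => x Ax; right.
  have h2 : V [set y].
    apply: (ultra_S hV _ (ultra_I hV h1 hC)) => x [[->|Ax] nA'] //.
  by rewrite (ultra_eq_principal hV h2); apply: hY.2.
- have h2 : V [set t].
    by apply: hn; rewrite nbhs_TuyE; split.
  by rewrite (ultra_eq_principal hV h2); apply: hY.2.
Qed.
End TuyConv.

Section FsEpi.
Variables (Y Z : pstop).
Hypothesis hY : pseudotopological Y.
Variables (J : Type) (D C : J -> topologicalType)
  (g : forall j, Z -> fun_space (ps_of_top (D j)) (ps_of_top (C j))).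
Hypothesis hg : forall (U : set (set Z)) (z : Z), ps_conv U z <->
  (is_ultrafilter U /\ forall j, @ps_conv _ (pushforward (g j) U) (g j z)).

Definition Jx := {j : J & {p : set (set Y) * Y | ps_conv p.1 p.2}}.
Definition Tk (k : Jx) : topologicalType := Tuy (proj1_sig (projT2 k)).1 (proj1_sig (projT2 k)).2.
Definition Dk (k : Jx) : topologicalType := (D (projT1 k) * Tk k)%type.
Definition Ck (k : Jx) : topologicalType := C (projT1 k).

Definition phif (k : Jx) (f : cmap Y Z) (x : Dk k) : Ck k :=
  proj1_sig (g (projT1 k) (proj1_sig f x.2)) x.1.
Arguments phif : clear implicits.

Lemma phif_cont k f : pcont (X := ps_of_top (Dk k)) (Y := ps_of_top (Ck k)) (phif k f).
Proof.
move=> W [d t] [hW hn].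
have hUy : ps_conv (proj1_sig (projT2 k)).1 (proj1_sig (projT2 k)).2 := proj2_sig (projT2 k).
have c2 : @ps_conv Y (pushforward snd W) t.
  apply: (Tuy_conv hY hUy); split; first exact: push_ultra.
  move=> B hB; apply: hn; apply/nbhs_prodE; exists setT, B; split; first exact: filterT.
  by split => // -[a b] [].
have c1 : fconv (X := ps_of_top (D (projT1 k))) (pushforward fst W) d.
  move=> V hV sV; split => // A hA; apply: sV; apply: hn; apply/nbhs_prodE.
  exists A, setT; split => //; split; first exact: filterT.
  by move=> -[a b] [].
have := (hg _ _).1 (proj2_sig f _ _ c2) => -[_ /(_ (projT1 k)) [_ h]].
have := h _ _ (push_filter _ (ultra_filter hW)) c1.
move=> hc; apply: (hc _ (push_ultra _ hW)).
move=> S [A [B [hA [hB s]]]].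
apply: (ultra_S hW _ (ultra_I hW hA hB)) => -[a b] [/= Ha Hb].
exact: (s (_, a) (conj Ha Hb)).
Qed.

Arguments phif_cont : clear implicits.
Definition Phi (k : Jx) (f : fun_space Y Z) : fun_space (ps_of_top (Dk k)) (ps_of_top (Ck k)) :=
  exist _ (phif k f) (phif_cont k f).
Arguments Phi : clear implicits.

Lemma fs_epi_main (F : set (set (fun_space Y Z))) (f : fun_space Y Z) :
  ps_conv F f <-> (is_ultrafilter F /\ forall k, @ps_conv _ (pushforward (Phi k) F) (Phi k f)).
Proof.
split.
- move=> [hF hconv]; split => // k.
  split; first exact: push_ultra.
  move=> G x hG hGx K hK sK.
  pose pi := fun w : fun_space Y Z * Dk k => phif k w.1 w.2.
  have sub : pushforward pi (prod_filter F G) `<=` K.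
    move=> S [A [B [hA [hB s]]]]; apply: sK.
    exists [set phi | exists f', A f' /\ Phi k f' = phi], B; split.
      by apply: (ultra_S hF _ hA) => f' Af'; exists f'.
    split => // -[phi x'] [/= [f' [Af' <-]] Bx'].
    exact: (s (f', x') (conj Af' Bx')).
  have [W [hW [sW eW]]] := ultra_lift (prod_filter_filter (ultra_filter hF) hG) hK sub.
  rewrite -eW.
  have eF : pushforward fst W = F by apply: (ultra_fst_prod hF hG hW sW).
  have c2 : @ps_conv (ps_of_top (Dk k)) (pushforward snd W) x.
    apply: hGx; first exact: push_ultra.
    by move=> S hS; apply: sW; apply: prod_snd => //; exact: ultra_filter.
  move: c2 => [_ hn].
  have hUy : ps_conv (proj1_sig (projT2 k)).1 (proj1_sig (projT2 k)).2 := proj2_sig (projT2 k).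
  have c22 : @ps_conv Y (pushforward (fun w => w.2.2) W) x.2.
    apply: (Tuy_conv hY hUy); split; first exact: push_ultra.
    move=> B hB; have h' : pushforward snd W [set p : Dk k | B p.2].
      apply: hn; apply/nbhs_prodE; exists setT, B; split; first exact: filterT.
      by split => // -[a b] [].
    exact: h'.
  have c21 : fconv (X := ps_of_top (D (projT1 k))) (pushforward (fun w => w.2.1) W) x.1.
    move=> V hV sV; split => // A hA; apply: sV.
    have h' : pushforward snd W [set p : Dk k | A p.1].
      apply: hn; apply/nbhs_prodE.
      exists A, setT; split => //; split; first exact: filterT.
      by move=> -[a b] [].
    exact: h'.
  have hz := hconv _ _ (push_filter _ (ultra_filter hW)) (conv_fconv hY c22).
  pose Kz := pushforward (fun w : fun_space Y Z * Dk k => proj1_sig w.1 w.2.2) W.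
  have cz : ps_conv Kz (proj1_sig f x.2).
    apply: (hz _ (push_ultra _ hW)).
    move=> S [A [B [hA [hB s]]]]; rewrite -eF in hA.
    apply: (ultra_S hW _ (ultra_I hW hA hB)) => -[w1 w2] [/= Ha Hb].
    exact: (s (w1, w2.2) (conj Ha Hb)).
  have := (hg _ _).1 cz => -[_ /(_ (projT1 k)) [_ h]].
  have := h _ _ (push_filter _ (ultra_filter hW)) c21.
  move=> hc; apply: (hc _ (push_ultra _ hW)).
  move=> S [A [B [hA [hB s]]]].
  apply: (ultra_S hW _ (ultra_I hW hA hB)) => -[w1 w2] [/= Ha Hb].
  exact: (s (_, w2.1) (conj Ha Hb)).
- move=> [hF hk]; split => // G t hG hGt K hK sK.
  have hKf := ultra_filter hK.
  have [W [hW [sW eW]]] := ultra_lift (prod_filter_filter (ultra_filter hF) hG) hK sK.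
  have eF : pushforward fst W = F by apply: (ultra_fst_prod hF hG hW sW).
  have cy : @ps_conv Y (pushforward snd W) t.
    apply: hGt; first exact: push_ultra.
    by move=> S hS; apply: sW; apply: prod_snd => //; exact: ultra_filter.
  apply/hg; split => // j.
  split; first exact: push_ultra.
  move=> G' d hG' hG'd K' hK' sK'.
  pose k : Jx := existT _ j (exist _ (pushforward snd W, t) cy).
  have := hk k => -[_ h].
  pose G'' : set (set (Dk k)) := prod_filter G' (pushforward snd W).
  have hG'' : is_filter G'' by apply: prod_filter_filter => //; exact/push_filter/ultra_filter.
  have fc : fconv (X := ps_of_top (Dk k)) G'' (d, t).
    move=> V hV sV; split => // N /nbhs_prodE [A [B [hA [hB s]]]].
    have v1 : @ps_conv (ps_of_top (D j)) (pushforward fst V) d.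
      apply: hG'd; first exact: push_ultra.
      by move=> S hS; apply: sV; apply: prod_fst => //; exact/push_filter/ultra_filter.
    have v2 : pushforward snd V = pushforward snd W.
      apply: (ultra_snd_prod hG' (push_ultra _ hW) hV sV).
    have hA' : V (fst @^-1` A) by case: v1 => _; apply.
    have hB' : V (snd @^-1` B).
      change (pushforward snd V B); rewrite v2.
      by move: hB; rewrite nbhs_TuyE => -[_]; apply => //; exact: push_ultra.
    by apply: (ultra_S hV _ (ultra_I hV hA' hB')) => -[a b] [/= Ha Hb]; apply: s.
  have := h _ _ hG'' fc.
  move=> hc; apply: (hc _ hK').
  move=> S [A [B [hA [hB s]]]].
  move: hB => [B1 [B2 [hB1 [hB2 sB]]]].
  apply: sK'.
  exists [set phi | forall d', B1 d' -> S (proj1_sig phi d')], B1; split.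
    change (K [set z | forall d', B1 d' -> S (proj1_sig (g j z) d')]).
    rewrite -eW.
    have w1 : W [set w | A (Phi k w.1)] by rewrite -eF in hA.
    have w2 : W [set w | B2 w.2] := hB2.
    apply: (ultra_S hW _ (ultra_I hW w1 w2)) => -[w1' w2'] [/= Ha Hb] d' Bd'.
    exact: (s (Phi k w1', (d', w2')) (conj Ha (sB (d', w2') (conj Bd' Hb)))).
  split => // -[phi d'] [/= hphi Bd']; exact: hphi.
Qed.

End FsEpi.

Lemma fs_epi (Y Z : pstop) : pseudotopological Y -> epitopological Z ->
  epitopological (fun_space Y Z).
Proof.
move=> hY [J [D [C [g hg]]]].
exists (Jx Y J), (Dk D), (Ck C), (fun k => Phi hY hg k).
exact: fs_epi_main.
Qed.

Lemma epi_pull (A : Type) (Z : pstop) (h : A -> Z) : epitopological Z ->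
  epitopological (@PsTop A (fun V a => is_ultrafilter V /\ ps_conv (pushforward h V) (h a))).
Proof.
move=> [J [Y [Zt [f hf]]]]; exists J, Y, Zt, (fun j a => f j (h a)) => U x /=; split.
- move=> [hU hc]; split => //; exact: ((hf _ _).1 hc).2.
- move=> [hU hj]; split => //; apply/hf; split => //; exact: push_ultra.
Qed.

Record epidata (X : pstop) : Type := EpiData {
  ej : Type;
  eY : ej -> topologicalType;
  eZ : ej -> topologicalType;
  ef : forall j, X -> fun_space (ps_of_top (eY j)) (ps_of_top (eZ j));
  eok : forall U x, ps_conv U x <->
    (is_ultrafilter U /\ forall j, @ps_conv _ (pushforward (ef j) U) (ef j x)) }.

Lemma epi_data (X : pstop) : epitopological X -> epidata X.
Proof.
move=> h; case/cid: h => J /cid [Y /cid [Z /cid [f hf]]].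
exact: (EpiData hf).
Qed.

Lemma epi_inter (P : Type) (Adm : (set (set P) -> P -> Prop) -> Prop) :
  (exists c, Adm c) -> (forall c, Adm c -> epitopological (PsTop c)) ->
  epitopological (@PsTop P (fun U z => forall c, Adm c -> c U z)).
Proof.
move=> [c0 h0] he.
pose E (c : {c | Adm c}) := epi_data (he _ (proj2_sig c)).
pose J' := {c : {c | Adm c} & ej (E c)}.
exists J', (fun k : J' => @eY _ (E (projT1 k)) (projT2 k)), (fun k : J' => @eZ _ (E (projT1 k)) (projT2 k)),
  (fun k : J' => @ef _ (E (projT1 k)) (projT2 k)).
move=> U z; split.
- move=> h; split.
    by have := (eok (E (exist _ c0 h0)) U z).1 (h c0 h0) => -[].
  move=> [[c hc] j]; exact: (((eok (E (exist _ c hc)) U z).1 (h c hc)).2 j).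
- move=> [hU hj] c hc; apply/(eok (E (exist _ c hc))); split => // j.
  exact: (hj (existT _ (exist _ c hc) j)).
Qed.

Section Pi0Epi.
Variables (X : pstop) (x0 : X).
Hypothesis hX : pseudotopological X.
Local Notation Om := (loop_space x0).
Local Notation P := (pi0car Om).
Local Notation q := (@pi0_proj Om).
Local Notation catL := (@catL X x0).
Local Notation revL := (@revL X x0).
Local Notation mulP := (@mulP X x0).
Local Notation invP := (@invP X x0).
Local Notation Pe := (pi0_epi Om).

Definition Adm (c : set (set P) -> P -> Prop) : Prop :=
  pseudotopological (PsTop c) /\ epitopological (PsTop c) /\ pcont (X := Om) (Y := PsTop c) q.

Lemma Pe_intro U z : (forall c, Adm c -> c U z) -> @ps_conv Pe U z.
Proof. by move=> h c h1 h2 h3; apply: h. Qed.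
Lemma Pe_elim U z c : @ps_conv Pe U z -> Adm c -> c U z.
Proof. by move=> h [h1 [h2 h3]]; apply: h. Qed.

Definition cch (U : set (set P)) (z : P) : Prop := is_ultrafilter U.

Lemma Adm_cch : Adm cch.
Proof.
split; last split.
- by split => // x; exact: principal_ultra.
- exists False, (fun j : False => match j with end), (fun j : False => match j with end),
    (fun j : False => match j with end) => U x; split.
  + by move=> h; split => // [[]].
  + by case.
- by move=> V a ha; apply: push_ultra; exact: (Om_pseudo x0).1 _ _ ha.
Qed.

Lemma Pe_pseudo : pseudotopological Pe.
Proof.
split.
- by move=> U z h; exact: (Pe_elim h Adm_cch).
- by move=> z; apply: Pe_intro => c [[_ h] _]; apply: h.
Qed.

Lemma Pe_epi : epitopological Pe.
Proof.
have -> : Pe = @PsTop P (fun U z => forall c, Adm c -> c U z).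
  rewrite /pi0_epi; congr PsTop; apply/funext => U; apply/funext => z; apply/propext; split.
  - by move=> h c [h1 [h2 h3]]; exact: h.
  - by move=> h c h1 h2 h3; apply: h.
exact: (@epi_inter P Adm (ex_intro _ cch Adm_cch) (fun c h => h.2.1)).
Qed.

Lemma qcomp_cont c (hc : Adm c) (f : Om -> Om) : pcont f ->
  pcont (X := Om) (Y := PsTop c) (fun l => q (f l)).
Proof. by move=> hf; apply: (pcont_comp hf); case: hc => _ []. Qed.

Lemma catL_l_cont (a : Om) : pcont (X := Om) (Y := Om) (catL a).
Proof.
apply: (pcont_comp (Y := prod_space Om Om) (f := fun l => (a, l)) _ (@catL_cont X x0)).
apply: pcont_pair; [exact: Om_pseudo| exact: (pcont_const _ (Om_pseudo x0) (Om_pseudo x0))| exact: pcont_id].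
Qed.
Lemma catL_r_cont (b : Om) : pcont (X := Om) (Y := Om) (fun l => catL l b).
Proof.
apply: (pcont_comp (Y := prod_space Om Om) (f := fun l => (l, b)) _ (@catL_cont X x0)).
apply: pcont_pair; [exact: Om_pseudo| exact: pcont_id | exact: (pcont_const _ (Om_pseudo x0) (Om_pseudo x0))].
Qed.

Lemma lmul_cont c (hc : Adm c) (A : P) : pcont (X := Pe) (Y := PsTop c) (mulP A).
Proof.
pose d := fun (V : set (set P)) b => is_ultrafilter V /\ c (pushforward (mulP A) V) (mulP A b).
have hd : Adm d.
  case: hc => [hps [hep hq]]; split; last split.
  - split; first by move=> U x [].
    by move=> x; split; [exact: principal_ultra| exact: hps.2].
  - exact: (epi_pull (Z := PsTop c) (mulP A) hep).
  - move=> V' a ha; split; first by apply: push_ultra; exact: (Om_pseudo x0).1 _ _ ha.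
    have e : (fun l => mulP A (q l)) = (fun l => q (catL (reprL A) l)).
      by apply/funext => l; rewrite {1}(repr_spec A) mulP_q.
    change (c (pushforward (fun l => mulP A (q l)) V') (mulP A (q a))).
    have -> : mulP A (q a) = q (catL (reprL A) a) by rewrite {1}(repr_spec A) mulP_q.
    rewrite e; apply: (qcomp_cont (conj hps (conj hep hq)) (catL_l_cont (reprL A))).
    exact: ha.
by move=> V b hV; case: (Pe_elim hV hd).
Qed.

Definition hmap c (hc : Adm c) (b : P) : cmap Om (PsTop c).
Proof.
refine (exist _ (fun l => mulP (q l) b) _).
have e : (fun l => mulP (q l) b) = (fun l => q (catL l (reprL b))).
  by apply/funext => l; rewrite {1}(repr_spec b) mulP_q.
rewrite e; exact: (qcomp_cont hc (catL_r_cont (reprL b))).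
Defined.

Lemma hmapE c hc b l : proj1_sig (@hmap c hc b) l = mulP (q l) b.
Proof. by []. Qed.

Lemma step1 c (hc : Adm c) (V : set (set P)) (b : P) : @ps_conv Pe V b ->
  @ps_conv (fun_space Om (PsTop c)) (pushforward (hmap hc) V) (hmap hc b).
Proof.
pose e := fun (V : set (set P)) b => is_ultrafilter V /\
  @ps_conv (fun_space Om (PsTop c)) (pushforward (hmap hc) V) (hmap hc b).
suff he : Adm e by move=> hV; case: (Pe_elim hV he).
have hc' := hc; case: hc' => [hps [hep hq]]; split; last split.
- split; first by move=> U x [].
  by move=> x; split; [exact: principal_ultra| exact: fs_principal].
- exact: (epi_pull (Z := fun_space Om (PsTop c)) (hmap hc) (fs_epi (Om_pseudo x0) hep)).
- move=> V' be hbe; have hV' : is_ultrafilter V' := (Om_pseudo x0).1 _ _ hbe.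
  split; first exact: push_ultra.
  split; first by do 2 apply: push_ultra.
  move=> G l hG hGl K hK sK.
  pose pi := fun p : Om * Om => mulP (q p.2) (q p.1).
  have sub : pushforward pi (prod_filter V' G) `<=` K.
    move=> S [A [B [hA [hB s]]]]; apply: sK.
    exists [set phi : cmap Om (PsTop c) | forall l', B l' -> S (proj1_sig phi l')], B.
    split; first by apply: (ultra_S hV' _ hA) => b' Ab' l' Bl'; exact: (s (b', l') (conj Ab' Bl')).
    by split => // -[phi l'] [/= h Bl']; apply: h.
  have [W [hW [sW eW]]] := ultra_lift (prod_filter_filter (ultra_filter hV') hG) hK sub.
  rewrite -eW.
  have e1 : pushforward fst W = V' by apply: (ultra_fst_prod hV' hG hW sW).
  have c2 : @ps_conv Om (pushforward snd W) l.
    apply: hGl; first exact: push_ultra.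
    by move=> S hS; apply: sW; apply: prod_snd => //; exact: ultra_filter.
  have cc : @ps_conv Om (pushforward (fun p : Om * Om => catL p.2 p.1) W) (catL l be).
    apply: (@catL_cont X x0 (pushforward (fun p : Om * Om => (p.2, p.1)) W) (l, be)).
    split; first exact: push_ultra.
    split; first exact: c2.
    by change (@ps_conv Om (pushforward fst W) be); rewrite e1.
  have := hq _ _ cc.
  have -> : pushforward q (pushforward (fun p : Om * Om => catL p.2 p.1) W) = pushforward pi W.
    apply/funext => S; rewrite /pushforward; congr W; apply/funext => -[m1 m2] /=.
    by rewrite /pi /= mulP_q.
  by move=> h; change (@ps_conv (PsTop c) (pushforward pi W) (mulP (q l) (q be))); rewrite mulP_q.
Qed.

Definition kmap c (hc : Adm c) (A : P) : cmap Pe (PsTop c) := exist _ (mulP A) (lmul_cont hc A).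

Lemma step2 c (hc : Adm c) (V : set (set P)) (a : P) : @ps_conv Pe V a ->
  @ps_conv (fun_space Pe (PsTop c)) (pushforward (kmap hc) V) (kmap hc a).
Proof.
pose dd := fun (V : set (set P)) a => is_ultrafilter V /\
  @ps_conv (fun_space Pe (PsTop c)) (pushforward (kmap hc) V) (kmap hc a).
suff he : Adm dd by move=> hV; case: (Pe_elim hV he).
have hc' := hc; case: hc' => [hps [hep hq]]; split; last split.
- split; first by move=> U x [].
  by move=> x; split; [exact: principal_ultra| exact: fs_principal].
- exact: (epi_pull (Z := fun_space Pe (PsTop c)) (kmap hc) (fs_epi Pe_pseudo hep)).
- move=> V' al hal; have hV' : is_ultrafilter V' := (Om_pseudo x0).1 _ _ hal.
  split; first exact: push_ultra.
  split; first by do 2 apply: push_ultra.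
  move=> G b hG hGb K hK sK.
  pose pi := fun p : Om * P => mulP (q p.1) p.2.
  have sub : pushforward pi (prod_filter V' G) `<=` K.
    move=> S [A [B [hA [hB s]]]]; apply: sK.
    exists [set phi : cmap Pe (PsTop c) | forall b', B b' -> S (proj1_sig phi b')], B.
    split; first by apply: (ultra_S hV' _ hA) => a' Aa' b' Bb'; exact: (s (a', b') (conj Aa' Bb')).
    by split => // -[phi b'] [/= h Bb']; apply: h.
  have [W [hW [sW eW]]] := ultra_lift (prod_filter_filter (ultra_filter hV') hG) hK sub.
  rewrite -eW.
  have e1 : pushforward fst W = V' by apply: (ultra_fst_prod hV' hG hW sW).
  have c2 : @ps_conv Pe (pushforward snd W) b.
    apply: hGb; first exact: push_ultra.
    by move=> S hS; apply: sW; apply: prod_snd => //; exact: ultra_filter.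
  have [_ h] := step1 hc c2.
  have c1 : fconv (X := Om) (pushforward fst W) al.
    by rewrite e1; apply: (conv_fconv (Om_pseudo x0)).
  have := h _ _ (push_filter _ (ultra_filter hW)) c1.
  move=> hcv; apply: (hcv _ (push_ultra _ hW)).
  move=> S [A [B [hA [hB s]]]].
  apply: (ultra_S hW _ (ultra_I hW hA hB)) => -[w1 w2] [/= Ha Hb].
  exact: (s (_, w1) (conj Ha Hb)).
Qed.

Lemma Pe_mul_cont : pcont (X := prod_space Pe Pe) (Y := Pe) (fun p => mulP p.1 p.2).
Proof.
move=> W [A B] [hW [h1 h2]]; apply: Pe_intro => c hc.
have [_ h] := step2 hc h1.
have c2 : fconv (X := Pe) (pushforward snd W) B by apply: (conv_fconv Pe_pseudo).
have := h _ _ (push_filter _ (ultra_filter hW)) c2.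
move=> hcv; apply: (hcv _ (push_ultra _ hW)).
move=> S [A' [B' [hA [hB s]]]].
apply: (ultra_S hW _ (ultra_I hW hA hB)) => -[w1 w2] [/= Ha Hb].
exact: (s (_, w2) (conj Ha Hb)).
Qed.

Lemma Pe_inv_cont : pcont (X := Pe) (Y := Pe) invP.
Proof.
move=> V a ha; apply: Pe_intro => c hc.
pose di := fun (V : set (set P)) a => is_ultrafilter V /\ c (pushforward invP V) (invP a).
have hd : Adm di.
  case: hc => [hps [hep hq]]; split; last split.
  - split; first by move=> U x [].
    by move=> x; split; [exact: principal_ultra| exact: hps.2].
  - exact: (epi_pull (Z := PsTop c) invP hep).
  - move=> V' al hal; split; first by apply: push_ultra; exact: (Om_pseudo x0).1 _ _ hal.
    have e : (fun l => invP (q l)) = (fun l => q (revL l)).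
      by apply/funext => l; rewrite invP_q.
    change (c (pushforward (fun l => invP (q l)) V') (invP (q al))).
    have -> : invP (q al) = q (revL al) by rewrite invP_q.
    rewrite e; apply: (qcomp_cont (conj hps (conj hep hq)) (@revL_cont X x0)).
    exact: hal.
by case: (Pe_elim ha hd).
Qed.

Lemma Pe_group : epi_group (G := Pe) mulP invP (eP x0 hX).
Proof.
have [h1 [h2 h3]] := group_laws x0 hX.
split; last exact: Pe_epi.
split; first exact: Pe_pseudo.
do 3 (split => //).
split; [exact: Pe_mul_cont | exact: Pe_inv_cont].
Qed.

End Pi0Epi.

Theorem mainTheorem11 :
  (forall (X : pstop) (x0 : X), pseudotopological X ->
     exists (mul : pi0car (loop_space x0) -> pi0car (loop_space x0) -> pi0car (loop_space x0))
            (inv : pi0car (loop_space x0) -> pi0car (loop_space x0))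
            (e : pi0car (loop_space x0)),
       loop_ops_ok mul inv /\
       ps_group (G := pi0_ps (loop_space x0)) mul inv e)
  /\
  (forall (X : pstop) (x0 : X), pseudotopological X -> epitopological X ->
     exists (mul : pi0car (loop_space x0) -> pi0car (loop_space x0) -> pi0car (loop_space x0))
            (inv : pi0car (loop_space x0) -> pi0car (loop_space x0))
            (e : pi0car (loop_space x0)),
       loop_ops_ok mul inv /\
       epi_group (G := pi0_epi (loop_space x0)) mul inv e).
Proof.
split.
- move=> X x0 hX; exists (@mulP X x0), (@invP X x0), (eP x0 hX); split.
  + exact: ops_ok.
  + exact: Ps_group.
- move=> X x0 hX _; exists (@mulP X x0), (@invP X x0), (eP x0 hX); split.
  + exact: ops_ok.
  + exact: Pe_group.
Qed.
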